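(* Let $(q_n)_{n\in\mathbb Z},(r_n)_{n\in\mathbb Z}$ be complex sequences vanishing faster than any negative power of $|n|$ as $n\to\pm\infty$ with $1-q_nr_n\neq0$ and $1+q_nr_{n+1}\neq0$ for all $n\in\mathbb Z$, and consider the system $$\begin{bmatrix}\alpha_n\\ \beta_n\end{bmatrix}=\begin{bmatrix} z & (z-z^{-1})q_n\\ z\,r_n & z^{-1}+(z-z^{-1})q_nr_n\end{bmatrix}\begin{bmatrix}\alpha_{n+1}\\ \beta_{n+1}\end{bmatrix},\qquad n\in\mathbb Z.$$ Then: (a) its left and right transmission coefficients coincide, $T_{\rm l}=T_{\rm r}$ and $\bar T_{\rm l}=\bar T_{\rm r}$; writing $T$ for the common value of $T_{\rm l},T_{\rm r}$ and $\bar T$ for that of $\bar T_{\rm l},\bar T_{\rm r}$, $T$ has a meromorphic extension from $\mathbb T$ to $|z|<1$ and $\bar T$ has a meromorphic extension from $\mathbb T$ to $|z|>1$. (b) For $z\in\mathbb T$, $$\frac{L}{T}=-\frac{\bar R}{\bar T},\qquad \frac{\bar L}{\bar T}=-\frac{R}{T},\qquad T\bar T=1-L\bar L=1-R\bar R.$$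
   Context: $\mathbb T$ is the unit circle. For $z\in\mathbb T$ the Jost solutions $\psi_n,\phi_n,\bar\psi_n,\bar\phi_n$ (overbars are not complex conjugation) are the unique solutions with $\psi_n=\begin{bmatrix}o(1)\\ z^n[1+o(1)]\end{bmatrix}$ as $n\to+\infty$; $\phi_n=\begin{bmatrix}z^{-n}[1+o(1)]\\ o(1)\end{bmatrix}$ as $n\to-\infty$; $\bar\psi_n=\begin{bmatrix}z^{-n}[1+o(1)]\\ o(1)\end{bmatrix}$ as $n\to+\infty$; $\bar\phi_n=\begin{bmatrix}o(1)\\ z^{n}[1+o(1)]\end{bmatrix}$ as $n\to-\infty$. The scattering coefficients are defined by $\psi_n=\begin{bmatrix}(L/T_{\rm l})z^{-n}[1+o(1)]\\ (1/T_{\rm l})z^{n}[1+o(1)]\end{bmatrix}$ as $n\to-\infty$; $\phi_n=\begin{bmatrix}(1/T_{\rm r})z^{-n}[1+o(1)]\\ (R/T_{\rm r})z^{n}[1+o(1)]\end{bmatrix}$ as $n\to+\infty$; $\bar\psi_n=\begin{bmatrix}(1/\bar T_{\rm l})z^{-n}[1+o(1)]\\ (\bar L/\bar T_{\rm l})z^{n}[1+o(1)]\end{bmatrix}$ as $n\to-\infty$; $\bar\phi_n=\begin{bmatrix}(\bar R/\bar T_{\rm r})z^{-n}[1+o(1)]\\ (1/\bar T_{\rm r})z^{n}[1+o(1)]\end{bmatrix}$ as $n\to+\infty$. *)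

(* Defs.v *)
From Stdlib Require Import Reals ZArith.
From Coquelicot Require Import Coquelicot.
Open Scope R_scope.

Definition Cpowz (z : C) (n : Z) : C :=
  match n with
  | Z0 => RtoC 1
  | Zpos p => Cpow z (Pos.to_nat p)
  | Zneg p => Cinv (Cpow z (Pos.to_nat p))
  end.

Definition on_circle (z : C) : Prop := Cmod z = 1.

Definition vanish_pinf (u : Z -> C) : Prop :=
  forall eps : R, 0 < eps -> exists N : Z, forall n : Z, (N <= n)%Z -> Cmod (u n) <= eps.
Definition vanish_minf (u : Z -> C) : Prop :=
  forall eps : R, 0 < eps -> exists N : Z, forall n : Z, (n <= N)%Z -> Cmod (u n) <= eps.

Definition rapid_decay (q : Z -> C) : Prop :=
  forall k : nat, vanish_pinf (fun n => RtoC (IZR (Z.abs n) ^ k) * q n)%C /\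
                  vanish_minf (fun n => RtoC (IZR (Z.abs n) ^ k) * q n)%C.

Definition is_solution (q r : Z -> C) (z : C) (f : Z -> C * C) : Prop :=
  forall n : Z,
    fst (f n) = (z * fst (f (n+1)%Z) + (z - / z) * q n * snd (f (n+1)%Z))%C /\
    snd (f n) = (z * r n * fst (f (n+1)%Z)
                 + (/ z + (z - / z) * q n * r n) * snd (f (n+1)%Z))%C.

(* f_n = [ a z^{-n}[1+o(1)] ; b z^n [1+o(1)] ]  as n -> +oo (resp. -oo);
   on the unit circle, with a coefficient a, "a z^{-n}[1+o(1)]" is written
   "a z^{-n} + o(1)" (same thing for a <> 0, the natural meaning of o(1) for a = 0) *)
Definition asymp_pinf (z : C) (f : Z -> C * C) (a b : C) : Prop :=
  vanish_pinf (fun n => fst (f n) - a * Cpowz z (- n))%C /\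
  vanish_pinf (fun n => snd (f n) - b * Cpowz z n)%C.
Definition asymp_minf (z : C) (f : Z -> C * C) (a b : C) : Prop :=
  vanish_minf (fun n => fst (f n) - a * Cpowz z (- n))%C /\
  vanish_minf (fun n => snd (f n) - b * Cpowz z n)%C.

(* At z on the unit circle, (Tl, L, Tr, R, Tbl, Lb, Tbr, Rb) are the scattering
   coefficients of the system: they come from the Jost solutions psi, phi, psib,
   phib (unique solutions with the prescribed asymptotics). *)
Definition scattering_coeffs (q r : Z -> C) (z : C)
    (Tl L Tr R Tbl Lb Tbr Rb : C) : Prop :=
  Tl <> RtoC 0 /\ Tr <> RtoC 0 /\ Tbl <> RtoC 0 /\ Tbr <> RtoC 0 /\
  exists psi phi psib phib : Z -> C * C,
    is_solution q r z psi /\ is_solution q r z phi /\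
    is_solution q r z psib /\ is_solution q r z phib /\
    asymp_pinf z psi (RtoC 0) (RtoC 1) /\
    asymp_minf z phi (RtoC 1) (RtoC 0) /\
    asymp_pinf z psib (RtoC 1) (RtoC 0) /\
    asymp_minf z phib (RtoC 0) (RtoC 1) /\
    asymp_minf z psi (L / Tl)%C (/ Tl)%C /\
    asymp_pinf z phi (/ Tr)%C (R / Tr)%C /\
    asymp_minf z psib (/ Tbl)%C (Lb / Tbl)%C /\
    asymp_pinf z phib (Rb / Tbr)%C (/ Tbr)%C.

Definition meromorphic_on (U : C -> Prop) (F : C -> C) (P : C -> Prop) : Prop :=
  (forall p, P p -> U p) /\
  (forall w, U w -> exists d : R, 0 < d /\
      forall p, P p -> p <> w -> d <= Cmod (p - w)%C) /\
  (forall w, U w -> ~ P w -> @ex_derive C_AbsRing C_NormedModule F w) /\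
  (forall p, P p -> exists (m : nat) (d M : R), 0 < d /\
      forall w, 0 < Cmod (w - p)%C < d -> Cmod (Cpow (w - p)%C m * F w)%C <= M).

(* T, given on the unit circle, has a meromorphic extension to the open set U
   whose boundary is the unit circle: a function meromorphic on U whose values
   tend to T(zeta) as w -> zeta (w in U, off the poles), for every zeta on the circle *)
Definition meromorphic_extension (U : C -> Prop) (T : C -> C) : Prop :=
  exists (F : C -> C) (P : C -> Prop),
    meromorphic_on U F P /\
    forall zeta, on_circle zeta ->
      forall eps : R, 0 < eps -> exists d : R, 0 < d /\
        forall w, U w -> ~ P w -> Cmod (w - zeta)%C < d -> Cmod (F w - T zeta)%C <= eps.

(* Main.v *)
Require Import Defs.
From Stdlib Require Import Reals ZArith Lra Lia.
From Stdlib Require Import ClassicalEpsilon Classical FunctionalExtensionality.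
From Coquelicot Require Import Coquelicot.
Open Scope R_scope.

Open Scope R_scope.

Lemma Cmod_opp (x : C) : Cmod (- x) = Cmod x.
Proof.
  replace (- x)%C with (- (1) * x)%C by ring.
  rewrite Cmod_mult, Cmod_m1; ring.
Qed.

Lemma Cmod_sub_sym (x y : C) : Cmod (x - y) = Cmod (y - x).
Proof.
  replace (x - y)%C with (- (y - x))%C by ring. apply Cmod_opp.
Qed.

Lemma Cmod_sub_le (x y : C) : Cmod (x - y) <= Cmod x + Cmod y.
Proof.
  unfold Cminus. eapply Rle_trans. apply Cmod_triangle. rewrite Cmod_opp. lra.
Qed.

Lemma Cmod_tri3 (x y z : C) : Cmod (x - z) <= Cmod (x - y) + Cmod (y - z).
Proof.
  replace (x - z)%C with ((x - y) + (y - z))%C by ring. apply Cmod_triangle.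
Qed.

Lemma Cmod_RtoC_nonneg (r : R) : 0 <= r -> Cmod (RtoC r) = r.
Proof. intros. rewrite Cmod_R. apply Rabs_right. lra. Qed.

Lemma Cmod_rev_tri (x y : C) : Cmod x - Cmod y <= Cmod (x - y).
Proof.
  pose proof (Cmod_triangle (x - y) y).
  replace (x - y + y)%C with x in H by ring. lra.
Qed.

Lemma pow_le1 (x : R) n : 0 <= x <= 1 -> x ^ n <= 1.
Proof. intros. induction n; simpl; [lra|]. pose proof (pow_le x n ltac:(lra)). nra. Qed.

Lemma Cmod_pow_le1 (z : C) (n : nat) : Cmod z <= 1 -> Cmod (Cpow z n) <= 1.
Proof.
  intros. rewrite Cmod_pow. apply pow_le1. pose proof (Cmod_ge_0 z). lra.
Qed.

Fixpoint csum (f : nat -> C) (n : nat) : C :=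
  match n with O => RtoC 0 | S n => (csum f n + f n)%C end.
Fixpoint rsum (f : nat -> R) (n : nat) : R :=
  match n with O => 0 | S n => rsum f n + f n end.

Lemma csum_ext f g n : (forall k, (k < n)%nat -> f k = g k) -> csum f n = csum g n.
Proof.
  induction n; simpl; intros; auto. rewrite IHn; [|intros; apply H; lia]. rewrite H; auto.
Qed.
Lemma rsum_ext f g n : (forall k, (k < n)%nat -> f k = g k) -> rsum f n = rsum g n.
Proof.
  induction n; simpl; intros; auto. rewrite IHn; [|intros; apply H; lia]. rewrite H; auto.
Qed.
Lemma rsum_le f g n : (forall k, (k < n)%nat -> f k <= g k) -> rsum f n <= rsum g n.
Proof.
  induction n; simpl; intros; [lra|]. pose proof (H n ltac:(lia)).
  assert (rsum f n <= rsum g n) by (apply IHn; intros; apply H; lia). lra.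
Qed.
Lemma rsum_nonneg f n : (forall k, (k < n)%nat -> 0 <= f k) -> 0 <= rsum f n.
Proof.
  intros. replace 0 with (rsum (fun _ => 0) n). apply rsum_le; auto.
  induction n; simpl; auto. rewrite IHn; [lra|]. intros; apply H; lia.
Qed.
Lemma csum_plus f g n : csum (fun k => f k + g k)%C n = (csum f n + csum g n)%C.
Proof. induction n; simpl. ring. rewrite IHn. ring. Qed.
Lemma csum_minus f g n : csum (fun k => f k - g k)%C n = (csum f n - csum g n)%C.
Proof. induction n; simpl. ring. rewrite IHn. ring. Qed.
Lemma csum_scal a f n : csum (fun k => a * f k)%C n = (a * csum f n)%C.
Proof. induction n; simpl. ring. rewrite IHn. ring. Qed.
Lemma rsum_plus f g n : rsum (fun k => f k + g k) n = rsum f n + rsum g n.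
Proof. induction n; simpl. ring. rewrite IHn. ring. Qed.
Lemma rsum_scal a f n : rsum (fun k => a * f k) n = a * rsum f n.
Proof. induction n; simpl. ring. rewrite IHn. ring. Qed.
Lemma csum_Cmod f n : Cmod (csum f n) <= rsum (fun k => Cmod (f k)) n.
Proof.
  induction n; simpl. rewrite Cmod_0; lra.
  eapply Rle_trans. apply Cmod_triangle. lra.
Qed.
Lemma rsum_mono f n m : (forall k, 0 <= f k) -> (n <= m)%nat -> rsum f n <= rsum f m.
Proof.
  intros Hf H. induction H; [lra|]. simpl. specialize (Hf m). lra.
Qed.
Lemma rsum_geom_le (x : R) n : 0 <= x < 1 -> rsum (fun k => x ^ k) n <= / (1 - x).
Proof.
  intros Hx.
  assert (forall n, rsum (fun k => x ^ k) n * (1 - x) = 1 - x ^ n).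
  { induction n0; simpl. ring. rewrite Rmult_plus_distr_r, IHn0. ring. }
  assert (0 < 1 - x) by lra.
  apply (Rmult_le_reg_r (1 - x)); auto. rewrite H. rewrite Rinv_l by lra.
  pose proof (pow_le x n ltac:(lra)). lra.
Qed.
Lemma rsum_split f n m : rsum f (n + m) = rsum f n + rsum (fun k => f (n + k)%nat) m.
Proof.
  induction m; simpl. rewrite Nat.add_0_r. ring.
  rewrite Nat.add_succ_r. simpl. rewrite IHm. ring.
Qed.
Lemma csum_split f n m : csum f (n + m) = (csum f n + csum (fun k => f (n + k)%nat) m)%C.
Proof.
  induction m; simpl. rewrite Nat.add_0_r. ring.
  rewrite Nat.add_succ_r. simpl. rewrite IHm. ring.
Qed.

Definition cconv (u : nat -> C) (l : C) : Prop :=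
  forall eps, 0 < eps -> exists N, forall n, (N <= n)%nat -> Cmod (u n - l) <= eps.

Lemma cconv_unique u l1 l2 : cconv u l1 -> cconv u l2 -> l1 = l2.
Proof.
  intros H1 H2. cut ((l1 - l2)%C = RtoC 0).
  { intros H. replace l1 with ((l1 - l2) + l2)%C by ring. rewrite H. ring. }
  apply Cmod_eq_0. apply Rle_antisym; [|apply Cmod_ge_0].
  apply Rnot_lt_le. intro Hl.
  destruct (H1 (Cmod (l1 - l2) / 3)) as [N1 HN1]; [lra|].
  destruct (H2 (Cmod (l1 - l2) / 3)) as [N2 HN2]; [lra|].
  specialize (HN1 (N1 + N2)%nat ltac:(lia)). specialize (HN2 (N1 + N2)%nat ltac:(lia)).
  pose proof (Cmod_tri3 l1 (u (N1+N2)%nat) l2). rewrite (Cmod_sub_sym l1 (u _)) in H. lra.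
Qed.

Lemma cconv_le u l b : cconv u l -> (exists N, forall n, (N <= n)%nat -> Cmod (u n) <= b) -> Cmod l <= b.
Proof.
  intros H [N HN]. apply Rnot_lt_le. intro Hl.
  destruct (H ((Cmod l - b)/2)) as [N1 HN1]; [lra|].
  specialize (HN1 (N + N1)%nat ltac:(lia)). specialize (HN (N + N1)%nat ltac:(lia)).
  pose proof (Cmod_rev_tri l (u (N+N1)%nat)). rewrite Cmod_sub_sym in H0. lra.
Qed.

Lemma cconv_dist u l x b : cconv u l -> (exists N, forall n, (N <= n)%nat -> Cmod (u n - x) <= b) -> Cmod (l - x) <= b.
Proof.
  intros H HN. apply (cconv_le (fun n => u n - x)%C). 2: auto.
  intros eps He. destruct (H eps He) as [N HN2]. exists N. intros n Hn.
  replace (u n - x - (l - x))%C with (u n - l)%C by ring. auto.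
Qed.

Lemma cconv_ext u v l : (forall n, u n = v n) -> cconv u l -> cconv v l.
Proof. intros H H1 eps He. destruct (H1 eps He) as [N HN]. exists N; intros; rewrite <- H; auto. Qed.

Lemma cconv_plus u v a b : cconv u a -> cconv v b -> cconv (fun n => u n + v n)%C (a + b)%C.
Proof.
  intros Hu Hv eps He. destruct (Hu (eps/2)) as [N1 H1]; [lra|]. destruct (Hv (eps/2)) as [N2 H2]; [lra|].
  exists (N1 + N2)%nat. intros n Hn. replace (u n + v n - (a + b))%C with ((u n - a) + (v n - b))%C by ring.
  eapply Rle_trans. apply Cmod_triangle. specialize (H1 n ltac:(lia)). specialize (H2 n ltac:(lia)). lra.
Qed.

Lemma cconv_scal u a c : cconv u a -> cconv (fun n => c * u n)%C (c * a)%C.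
Proof.
  intros Hu eps He. destruct (Hu (eps / (Cmod c + 1))) as [N H1].
  { apply Rdiv_lt_0_compat; auto. pose proof (Cmod_ge_0 c); lra. }
  exists N. intros n Hn. replace (c * u n - c * a)%C with (c * (u n - a))%C by ring.
  rewrite Cmod_mult. specialize (H1 n Hn). pose proof (Cmod_ge_0 c).
  apply Rle_trans with (Cmod c * (eps / (Cmod c + 1))). apply Rmult_le_compat_l; auto.
  apply Rle_trans with ((Cmod c + 1) * (eps / (Cmod c + 1))). apply Rmult_le_compat_r. 
  apply Rlt_le, Rdiv_lt_0_compat; lra. lra. right. field. lra.
Qed.

Lemma cconv_const c : cconv (fun _ => c) c.
Proof. intros eps He. exists O. intros. replace (c - c)%C with (RtoC 0) by ring. rewrite Cmod_0; lra. Qed.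

Lemma cconv_shift u l k : cconv u l -> cconv (fun n => u (n + k)%nat) l.
Proof. intros H eps He. destruct (H eps He) as [N HN]. exists N. intros. apply HN. lia. Qed.

Lemma cconv_zero_bound u l (b : nat -> R) : (forall n, Cmod (u n - l) <= b n) ->
  (forall eps, 0 < eps -> exists N, forall n, (N <= n)%nat -> b n <= eps) -> cconv u l.
Proof. intros H1 H2 eps He. destruct (H2 eps He) as [N HN]. exists N. intros. eapply Rle_trans; eauto. Qed.

Lemma Re_minus (x y : C) : Re (x - y) = Re x - Re y.
Proof. destruct x, y. unfold Cminus, Cplus, Copp, Re; simpl. ring. Qed.
Lemma Im_minus (x y : C) : Im (x - y) = Im x - Im y.
Proof. destruct x, y. unfold Cminus, Cplus, Copp, Im; simpl. ring. Qed.

Lemma im_le_Cmod' (c : C) : Rabs (Im c) <= Cmod c.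
Proof. destruct c as [a b]. unfold Cmod; simpl. rewrite <- sqrt_Rsqr_abs. apply sqrt_le_1_alt. unfold Rsqr; nra. Qed.

Lemma Cmod_le_sum (c : C) : Cmod c <= Rabs (Re c) + Rabs (Im c).
Proof.
  destruct c as [a b]. unfold Cmod; simpl.
  pose proof (Rabs_pos a); pose proof (Rabs_pos b).
  rewrite <- (sqrt_pow2 (Rabs a + Rabs b)) by lra. apply sqrt_le_1_alt.
  simpl. pose proof (pow2_abs a); pose proof (pow2_abs b). simpl in *. nra.
Qed.

Lemma C_cauchy (u : nat -> C) :
  (forall eps, 0 < eps -> exists N, forall n m, (N <= n)%nat -> (N <= m)%nat -> Cmod (u n - u m) <= eps) ->
  exists l, cconv u l.
Proof.
  intros H.
  assert (Hre : Cauchy_crit (fun n => Re (u n))).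
  { intros eps He. destruct (H (eps/2)) as [N HN]; [lra|]. exists N. intros n m Hn Hm.
    unfold Rdist. specialize (HN n m Hn Hm). pose proof (re_le_Cmod (u n - u m)%C).
    rewrite Re_minus in H0. lra. }
  assert (Him : Cauchy_crit (fun n => Im (u n))).
  { intros eps He. destruct (H (eps/2)) as [N HN]; [lra|]. exists N. intros n m Hn Hm.
    unfold Rdist. specialize (HN n m Hn Hm). pose proof (im_le_Cmod' (u n - u m)%C).
    rewrite Im_minus in H0. lra. }
  destruct (Rcomplete.R_complete _ Hre) as [a Ha]. destruct (Rcomplete.R_complete _ Him) as [b Hb].
  exists (a, b). intros eps He.
  destruct (Ha (eps/2)) as [N1 H1]; [lra|]. destruct (Hb (eps/2)) as [N2 H2]; [lra|].
  exists (N1 + N2)%nat. intros n Hn. specialize (H1 n ltac:(lia)). specialize (H2 n ltac:(lia)).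
  unfold Rdist in *. eapply Rle_trans. apply Cmod_le_sum. rewrite Re_minus, Im_minus. simpl. lra.
Qed.

Definition clim (u : nat -> C) : C :=
  match excluded_middle_informative (exists l, cconv u l) with
  | left H => proj1_sig (constructive_indefinite_description _ H)
  | right _ => RtoC 0
  end.

Lemma clim_spec u : (exists l, cconv u l) -> cconv u (clim u).
Proof.
  intros H. unfold clim. destruct excluded_middle_informative; [|tauto].
  destruct constructive_indefinite_description. auto.
Qed.

Lemma clim_eq u l : cconv u l -> clim u = l.
Proof. intros H. apply (cconv_unique u); auto. apply clim_spec. eauto. Qed.

Lemma pow_lim0 (x : R) : 0 <= x < 1 -> forall eps, 0 < eps -> exists N, forall n, (N <= n)%nat -> x ^ n <= eps.
Proof.
  intros Hx eps He. destruct (pow_lt_1_zero x ltac:(rewrite Rabs_right; lra) eps He) as [N HN].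
  exists N. intros n Hn. specialize (HN n Hn). rewrite Rabs_right in HN. lra.
  apply Rle_ge, pow_le; lra.
Qed.

Lemma bernoulli (s : R) n : 0 <= s -> 1 + INR n * s <= (1 + s) ^ n.
Proof.
  intros Hs. induction n. simpl. lra. rewrite S_INR. simpl.
  pose proof (pos_INR n). nra.
Qed.

Lemma npow_lim0 (x : R) : 0 <= x < 1 -> forall eps, 0 < eps -> exists N, forall n, (N <= n)%nat -> INR n * x ^ n <= eps.
Proof.
  intros Hx eps He.
  destruct (Req_dec x 0) as [Hx0|Hx0].
  { exists 1%nat. intros n Hn. subst. rewrite pow_i by lia. lra. }
  set (y := sqrt x). assert (Hy : 0 < y < 1).
  { unfold y. split. apply sqrt_lt_R0; lra. rewrite <- sqrt_1. apply sqrt_lt_1; lra. }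
  set (s := / y - 1). assert (Hs : 0 < s). { unfold s. assert (1 < / y). { rewrite <- Rinv_1. apply Rinv_lt_contravar; lra. } lra. }
  assert (Hb : forall n, INR n * y ^ n <= / s).
  { intros n. pose proof (bernoulli s n ltac:(lra)). assert (1 + s = / y) by (unfold s; ring).
    rewrite H0 in H. rewrite pow_inv in H. 
    assert (0 < y ^ n) by (apply pow_lt; lra).
    apply Rmult_le_reg_l with s; auto. rewrite Rinv_r by lra.
    apply Rmult_le_reg_r with (/ y ^ n). apply Rinv_0_lt_compat; auto.
    replace (s * (INR n * y ^ n) * / y ^ n) with (INR n * s) by (field; lra). lra. }
  destruct (pow_lim0 y ltac:(lra) (eps * s)) as [N HN]. apply Rmult_lt_0_compat; auto.
  exists N. intros n Hn. specialize (HN n Hn). specialize (Hb n).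
  assert (x ^ n = y ^ n * y ^ n). { rewrite <- Rpow_mult_distr. unfold y. rewrite sqrt_sqrt; lra. }
  rewrite H. assert (0 <= y ^ n) by (apply pow_le; lra).
  apply Rle_trans with (/ s * y ^ n). 
  replace (INR n * (y ^ n * y ^ n)) with ((INR n * y ^ n) * y ^ n) by ring. apply Rmult_le_compat_r; auto.
  apply Rmult_le_reg_l with s; auto. rewrite <- Rmult_assoc, Rinv_r by lra. lra.
Qed.

Open Scope R_scope.

Lemma Cpow_nz (z : C) n : z <> RtoC 0 -> Cpow z n <> RtoC 0.
Proof.
  intros Hz H. apply Cmod_gt_0 in Hz. assert (Cmod (Cpow z n) = 0) by (rewrite H; apply Cmod_0).
  rewrite Cmod_pow in H0. pose proof (pow_lt (Cmod z) n Hz). lra.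
Qed.

Lemma Cpowz_spec z n : Cpowz z n = if Z_le_dec 0 n then Cpow z (Z.to_nat n) else (/ Cpow z (Z.to_nat (- n)))%C.
Proof.
  destruct (Z_le_dec 0 n); destruct n; simpl; try reflexivity; try lia.
Qed.

Lemma Cpowz_succ z n : z <> RtoC 0 -> Cpowz z (n + 1) = (z * Cpowz z n)%C.
Proof.
  intros Hz. rewrite !Cpowz_spec.
  destruct (Z_le_dec 0 n), (Z_le_dec 0 (n + 1)); try lia.
  - replace (Z.to_nat (n + 1)) with (S (Z.to_nat n)) by lia. reflexivity.
  - assert (n = -1)%Z by lia. subst. simpl. field. auto.
  - replace (Z.to_nat (- n)) with (S (Z.to_nat (- (n + 1)))) by lia. simpl.
    field. split; auto. apply Cpow_nz; auto.
Qed.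

Lemma Cpowz_mod z n : Cmod z = 1 -> Cmod (Cpowz z n) = 1.
Proof.
  intros Hz. rewrite Cpowz_spec. destruct Z_le_dec.
  - rewrite Cmod_pow, Hz. apply pow1.
  - assert (z <> RtoC 0). { intro H; rewrite H, Cmod_0 in Hz; lra. }
    rewrite Cmod_inv by (apply Cpow_nz; auto). rewrite Cmod_pow, Hz, pow1. apply Rinv_1.
Qed.

Lemma Cpowz_opp_mul z n : z <> RtoC 0 -> (Cpowz z (- n) * Cpowz z n)%C = RtoC 1.
Proof.
  intros Hz. rewrite !Cpowz_spec.
  destruct (Z_le_dec 0 (-n)), (Z_le_dec 0 n).
  - assert (n = 0)%Z by lia. subst. simpl. ring.
  - replace (- - n)%Z with n by lia. field. apply Cpow_nz; auto.
  - replace (- - n)%Z with n by lia. field. apply Cpow_nz; auto.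
  - lia.
Qed.

Definition Wr (f g : Z -> C * C) (n : Z) : C :=
  (fst (f n) * snd (g n) - snd (f n) * fst (g n))%C.

Lemma Wr_step q r z f g n : z <> RtoC 0 -> is_solution q r z f -> is_solution q r z g ->
  Wr f g n = Wr f g (n + 1).
Proof.
  intros Hz Hf Hg. unfold Wr. destruct (Hf n) as [F1 F2]. destruct (Hg n) as [G1 G2].
  rewrite F1, F2, G1, G2. field. auto.
Qed.

Lemma Zconst (w : Z -> C) : (forall n, w n = w (n + 1)%Z) -> forall n, w n = w 0%Z.
Proof.
  intros H n. induction n using Z.peano_ind; auto.
  - rewrite <- IHn. rewrite <- Z.add_1_r. symmetry; auto.
  - rewrite <- IHn. rewrite (H (Z.pred n)). f_equal. lia.
Qed.

Lemma Cmod_sum6 (x1 x2 x3 x4 x5 x6 : C) :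
  Cmod (x1 + x2 + x3 - x4 - x5 - x6) <= Cmod x1 + Cmod x2 + Cmod x3 + Cmod x4 + Cmod x5 + Cmod x6.
Proof.
  pose proof (Cmod_triangle x1 x2). pose proof (Cmod_triangle (x1 + x2) x3).
  pose proof (Cmod_sub_le (x1 + x2 + x3) x4). pose proof (Cmod_sub_le (x1 + x2 + x3 - x4) x5).
  pose proof (Cmod_sub_le (x1 + x2 + x3 - x4 - x5) x6). lra.
Qed.

Section Ev.
Variable Ev : (Z -> Prop) -> Prop.
Hypothesis Ev_and : forall P Q, Ev P -> Ev Q -> Ev (fun n => P n /\ Q n).
Hypothesis Ev_mono : forall (P Q : Z -> Prop), (forall n, P n -> Q n) -> Ev P -> Ev Q.
Hypothesis Ev_ne : forall P, Ev P -> exists n, P n.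

Definition vanish (u : Z -> C) := forall eps, 0 < eps -> Ev (fun n => Cmod (u n) <= eps).

Lemma Wr_lim z f g a b c d : Cmod z = 1 ->
  vanish (fun n => fst (f n) - a * Cpowz z (- n))%C ->
  vanish (fun n => snd (f n) - b * Cpowz z n)%C ->
  vanish (fun n => fst (g n) - c * Cpowz z (- n))%C ->
  vanish (fun n => snd (g n) - d * Cpowz z n)%C ->
  vanish (fun n => Wr f g n - (a * d - b * c))%C.
Proof.
  intros Hz H1 H2 H3 H4 eps He.
  assert (Hz0 : z <> RtoC 0). { intro H; rewrite H, Cmod_0 in Hz; lra. }
  set (S := Cmod a + Cmod b + Cmod c + Cmod d).
  assert (HS : 0 <= S) by (unfold S; pose proof (Cmod_ge_0 a); pose proof (Cmod_ge_0 b);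
     pose proof (Cmod_ge_0 c); pose proof (Cmod_ge_0 d); lra).
  set (eta := Rmin 1 (eps / (S + 2))).
  assert (Heta : 0 < eta) by (unfold eta; apply Rmin_pos; [lra|apply Rdiv_lt_0_compat; lra]).
  assert (Heta1 : eta <= 1) by apply Rmin_l.
  assert (Heta2 : eta * (S + 2) <= eps).
  { unfold eta. apply Rle_trans with (eps / (S + 2) * (S + 2)). apply Rmult_le_compat_r. lra. apply Rmin_r.
    right. field. lra. }
  specialize (H1 eta Heta). specialize (H2 eta Heta). specialize (H3 eta Heta). specialize (H4 eta Heta).
  pose proof (Ev_and _ _ (Ev_and _ _ H1 H2) (Ev_and _ _ H3 H4)) as H.
  eapply Ev_mono; [|exact H]. intros n [[E1 E2] [E3 E4]]. simpl in *.
  set (e1 := (fst (f n) - a * Cpowz z (- n))%C) in *.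
  set (e2 := (snd (f n) - b * Cpowz z n)%C) in *.
  set (e3 := (fst (g n) - c * Cpowz z (- n))%C) in *.
  set (e4 := (snd (g n) - d * Cpowz z n)%C) in *.
  pose proof (Cpowz_opp_mul z n Hz0) as Hm.
  assert (Wr f g n - (a * d - b * c) =
     a * Cpowz z (- n) * e4 + d * Cpowz z n * e1 + e1 * e4 - b * Cpowz z n * e3 - c * Cpowz z (- n) * e2 - e2 * e3)%C.
  { unfold Wr, e1, e2, e3, e4.
    replace (a * d - b * c)%C with (a * d * (Cpowz z (- n) * Cpowz z n) - b * c * (Cpowz z (- n) * Cpowz z n))%C
      by (rewrite Hm; ring). ring. }
  rewrite H0. clear H0.
  pose proof (Cpowz_mod z n Hz). pose proof (Cpowz_mod z (- n) Hz).
  eapply Rle_trans. apply Cmod_sum6. rewrite !Cmod_mult. rewrite H0, H5.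
  pose proof (Cmod_ge_0 e1); pose proof (Cmod_ge_0 e2); pose proof (Cmod_ge_0 e3); pose proof (Cmod_ge_0 e4).
  pose proof (Cmod_ge_0 a); pose proof (Cmod_ge_0 b); pose proof (Cmod_ge_0 c); pose proof (Cmod_ge_0 d).
  assert (Cmod e1 * Cmod e4 <= eta) by nra. assert (Cmod e2 * Cmod e3 <= eta) by nra.
  assert (Cmod a * Cmod e4 <= Cmod a * eta) by nra. assert (Cmod d * Cmod e1 <= Cmod d * eta) by nra.
  assert (Cmod b * Cmod e3 <= Cmod b * eta) by nra. assert (Cmod c * Cmod e2 <= Cmod c * eta) by nra.
  unfold S in Heta2. nra.
Qed.

Lemma const_lim (w0 X : C) : vanish (fun _ => w0 - X)%C -> w0 = X.
Proof.
  intros H. cut ((w0 - X)%C = RtoC 0). { intros H0. replace w0 with ((w0 - X) + X)%C by ring. rewrite H0; ring. }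
  apply Cmod_eq_0. apply Rle_antisym; [|apply Cmod_ge_0]. apply Rnot_lt_le. intro Hl.
  destruct (Ev_ne _ (H (Cmod (w0 - X) / 2) ltac:(lra))). lra.
Qed.

Lemma Wr_value q r z f g a b c d : Cmod z = 1 -> is_solution q r z f -> is_solution q r z g ->
  vanish (fun n => fst (f n) - a * Cpowz z (- n))%C ->
  vanish (fun n => snd (f n) - b * Cpowz z n)%C ->
  vanish (fun n => fst (g n) - c * Cpowz z (- n))%C ->
  vanish (fun n => snd (g n) - d * Cpowz z n)%C ->
  Wr f g 0%Z = (a * d - b * c)%C.
Proof.
  intros Hz Hf Hg H1 H2 H3 H4.
  assert (Hz0 : z <> RtoC 0). { intro H; rewrite H, Cmod_0 in Hz; lra. }
  apply const_lim. pose proof (Wr_lim z f g a b c d Hz H1 H2 H3 H4).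
  intros eps He. eapply Ev_mono; [|apply (H eps He)]. intros n Hn. simpl in Hn.
  assert (HW : forall m, Wr f g m = Wr f g (m + 1)%Z) by (intros m; apply (Wr_step q r z f g m Hz0 Hf Hg)).
  rewrite <- (Zconst (Wr f g) HW n). auto.
Qed.
End Ev.

Definition Evp (P : Z -> Prop) := exists N, forall n, (N <= n)%Z -> P n.
Definition Evm (P : Z -> Prop) := exists N, forall n, (n <= N)%Z -> P n.

Lemma Evp_and P Q : Evp P -> Evp Q -> Evp (fun n => P n /\ Q n).
Proof. intros [N1 H1] [N2 H2]. exists (Z.max N1 N2). intros; split; [apply H1|apply H2]; lia. Qed.
Lemma Evm_and P Q : Evm P -> Evm Q -> Evm (fun n => P n /\ Q n).
Proof. intros [N1 H1] [N2 H2]. exists (Z.min N1 N2). intros; split; [apply H1|apply H2]; lia. Qed.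
Lemma Evp_mono (P Q : Z -> Prop) : (forall n, P n -> Q n) -> Evp P -> Evp Q.
Proof. intros H [N HN]. exists N; auto. Qed.
Lemma Evm_mono (P Q : Z -> Prop) : (forall n, P n -> Q n) -> Evm P -> Evm Q.
Proof. intros H [N HN]. exists N; auto. Qed.
Lemma Evp_ne P : Evp P -> exists n, P n.
Proof. intros [N HN]. exists N; apply HN; lia. Qed.
Lemma Evm_ne P : Evm P -> exists n, P n.
Proof. intros [N HN]. exists N; apply HN; lia. Qed.

Lemma Wr_pinf q r z f g a b c d : Cmod z = 1 -> is_solution q r z f -> is_solution q r z g ->
  asymp_pinf z f a b -> asymp_pinf z g c d -> Wr f g 0%Z = (a * d - b * c)%C.
Proof.
  intros Hz Hf Hg [H1 H2] [H3 H4].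
  apply (Wr_value Evp Evp_and Evp_mono Evp_ne q r z f g); auto.
Qed.

Lemma Wr_minf q r z f g a b c d : Cmod z = 1 -> is_solution q r z f -> is_solution q r z g ->
  asymp_minf z f a b -> asymp_minf z g c d -> Wr f g 0%Z = (a * d - b * c)%C.
Proof.
  intros Hz Hf Hg [H1 H2] [H3 H4].
  apply (Wr_value Evm Evm_and Evm_mono Evm_ne q r z f g); auto.
Qed.

Lemma Cinv_inj (a b : C) : a <> RtoC 0 -> b <> RtoC 0 -> (/ a)%C = (/ b)%C -> a = b.
Proof.
  intros Ha Hb H. replace a with (/ / a)%C by (field; auto). rewrite H. field. auto.
Qed.

Lemma partb q r z Tl L Tr R Tbl Lb Tbr Rb : on_circle z ->
  scattering_coeffs q r z Tl L Tr R Tbl Lb Tbr Rb ->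
  (Tl = Tr /\ Tbl = Tbr) /\
  (L / Tl = - (Rb / Tbl))%C /\ (Lb / Tbl = - (R / Tl))%C /\
  (Tl * Tbl = 1 - L * Lb)%C /\ (Tl * Tbl = 1 - R * Rb)%C.
Proof.
  intros Hz (HTl & HTr & HTbl & HTbr & psi & phi & psib & phib & Spsi & Sphi & Spsib & Sphib &
     Ppsi & Mphi & Ppsib & Mphib & Mpsi & Pphi & Mpsib & Pphib).
  unfold on_circle in Hz.
  pose proof (Wr_minf q r z phi psi _ _ _ _ Hz Sphi Spsi Mphi Mpsi) as W1.
  pose proof (Wr_pinf q r z phi psi _ _ _ _ Hz Sphi Spsi Pphi Ppsi) as W2.
  rewrite W1 in W2.
  assert (ETl : Tl = Tr). { apply Cinv_inj; auto. rewrite <- (Cmult_1_l (/ Tl)), <- (Cmult_1_l (/ Tr)).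
    replace (1 * / Tl)%C with (1 * / Tl - 0 * (L / Tl))%C by ring. rewrite W2. ring. }
  pose proof (Wr_pinf q r z psib phib _ _ _ _ Hz Spsib Sphib Ppsib Pphib) as W3.
  pose proof (Wr_minf q r z psib phib _ _ _ _ Hz Spsib Sphib Mpsib Mphib) as W4.
  rewrite W3 in W4.
  assert (ETb : Tbl = Tbr). { apply Cinv_inj; auto. 
    replace (/ Tbr)%C with (1 * / Tbr - 0 * (Rb / Tbr))%C by ring. rewrite W4. ring. }
  subst Tr Tbr.
  pose proof (Wr_pinf q r z psi psib _ _ _ _ Hz Spsi Spsib Ppsi Ppsib) as W5.
  pose proof (Wr_minf q r z psi psib _ _ _ _ Hz Spsi Spsib Mpsi Mpsib) as W6.
  rewrite W5 in W6.
  pose proof (Wr_minf q r z phi phib _ _ _ _ Hz Sphi Sphib Mphi Mphib) as W7.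
  pose proof (Wr_pinf q r z phi phib _ _ _ _ Hz Sphi Sphib Pphi Pphib) as W8.
  rewrite W7 in W8.
  pose proof (Wr_pinf q r z psi phib _ _ _ _ Hz Spsi Sphib Ppsi Pphib) as W9.
  pose proof (Wr_minf q r z psi phib _ _ _ _ Hz Spsi Sphib Mpsi Mphib) as W10.
  rewrite W9 in W10.
  pose proof (Wr_minf q r z phi psib _ _ _ _ Hz Sphi Spsib Mphi Mpsib) as W11.
  pose proof (Wr_pinf q r z phi psib _ _ _ _ Hz Sphi Spsib Pphi Ppsib) as W12.
  rewrite W11 in W12.
  split; [auto|].
  split; [|split; [|split]].
  - transitivity (0 * (/ Tbl) - 1 * (Rb / Tbl))%C; [|ring].
    rewrite W10. field. auto.
  - transitivity (1 * (Lb / Tbl) - 0 * / Tbl)%C; [ring|].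
    rewrite W12. field. auto.
  - assert (H : (0 * 0 - 1 * 1)%C = (L / Tl * (Lb / Tbl) - / Tl * / Tbl)%C) by exact W6.
    apply (f_equal (fun x => x * Tl * Tbl)%C) in H.
    replace ((L / Tl * (Lb / Tbl) - / Tl * / Tbl) * Tl * Tbl)%C with (L * Lb - 1)%C in H by (field; auto).
    replace (1 - L * Lb)%C with (- (L * Lb - 1))%C by ring. rewrite <- H. ring.
  - assert (H : (1 * 1 - 0 * 0)%C = (/ Tl * / Tbl - R / Tl * (Rb / Tbl))%C) by exact W8.
    apply (f_equal (fun x => x * Tl * Tbl)%C) in H.
    replace ((/ Tl * / Tbl - R / Tl * (Rb / Tbl)) * Tl * Tbl)%C with (1 - R * Rb)%C in H by (field; auto).
    rewrite <- H. ring.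
Qed.

Open Scope R_scope.

Lemma deriv_lemma (F H : C -> C) (w : C) (r : R) : 0 < r ->
  (forall z, Cmod (z - w) < r -> F z = (F w + (z - w) * H z)%C) ->
  (forall e, 0 < e -> exists dl, 0 < dl /\ forall z, Cmod (z - w) < dl -> Cmod (H z - H w) <= e) ->
  @ex_derive C_AbsRing C_NormedModule F w.
Proof.
  intros Hr HF HH. exists (H w). split. apply is_linear_scal_l.
  intros x Hx. pose proof (@is_filter_lim_locally_unique C_AbsRing (AbsRing_NormedModule C_AbsRing) w x Hx) as Hx2. subst x.
  intros eps. destruct (HH eps (cond_pos eps)) as [dl [Hdl Hd]].
  assert (Hm : 0 < Rmin r dl / (@norm_factor C_AbsRing (AbsRing_NormedModule C_AbsRing))).
  { apply Rdiv_lt_0_compat. apply Rmin_pos; auto. apply norm_factor_gt_0. }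
  exists (mkposreal _ Hm). intros y Hy. apply (@norm_compat2 C_AbsRing (AbsRing_NormedModule C_AbsRing)) in Hy. simpl in Hy.
  change (Cmod (F y - F w - (y - w) * H w) <= eps * Cmod (y - w)).
  assert (Hyw : Cmod (y - w) < Rmin r dl).
  { change (@norm C_AbsRing (AbsRing_NormedModule C_AbsRing) (@minus (AbsRing_NormedModule C_AbsRing) y w)) with (Cmod (y - w)) in Hy.
    replace (@norm_factor C_AbsRing (AbsRing_NormedModule C_AbsRing) * (Rmin r dl / @norm_factor C_AbsRing (AbsRing_NormedModule C_AbsRing))) with (Rmin r dl) in Hy.
    auto. field. apply Rgt_not_eq, norm_factor_gt_0. }
  rewrite HF by (eapply Rlt_le_trans; [exact Hyw|apply Rmin_l]).
  replace (F w + (y - w) * H y - F w - (y - w) * H w)%C with ((y - w) * (H y - H w))%C by ring.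
  rewrite Cmod_mult. rewrite Rmult_comm. apply Rmult_le_compat_r. apply Cmod_ge_0.
  apply Hd. eapply Rlt_le_trans; [exact Hyw|apply Rmin_r].
Qed.

Open Scope R_scope.

Definition poly := nat -> C.
Definition p0 : poly := fun _ => RtoC 0.
Definition pone : poly := fun k => match k with O => RtoC 1 | _ => RtoC 0 end.
Definition padd (p q : poly) : poly := fun k => (p k + q k)%C.
Definition psub (p q : poly) : poly := fun k => (p k - q k)%C.
Definition pscal (a : C) (p : poly) : poly := fun k => (a * p k)%C.
Definition pX2 (p : poly) : poly := fun k => match k with O => RtoC 0 | S O => RtoC 0 | S (S k) => p k end.
Definition aff (a b : C) (p : poly) : poly := padd (pscal a p) (pscal b (pX2 p)).
Definition pnorm (d : nat) (p : poly) : R := rsum (fun k => Cmod (p k)) d.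

Lemma pnorm_nonneg d p : 0 <= pnorm d p.
Proof. apply rsum_nonneg. intros; apply Cmod_ge_0. Qed.
Lemma pnorm_add d p q : pnorm d (padd p q) <= pnorm d p + pnorm d q.
Proof. unfold pnorm. rewrite <- rsum_plus. apply rsum_le. intros; apply Cmod_triangle. Qed.
Lemma pnorm_sub d p q : pnorm d (psub p q) <= pnorm d p + pnorm d q.
Proof. unfold pnorm. rewrite <- rsum_plus. apply rsum_le. intros; apply Cmod_sub_le. Qed.
Lemma pnorm_scal d a p : pnorm d (pscal a p) = Cmod a * pnorm d p.
Proof. unfold pnorm, pscal. rewrite <- rsum_scal. apply rsum_ext. intros; apply Cmod_mult. Qed.
Lemma pnorm_mono d d' p : (d <= d')%nat -> pnorm d p <= pnorm d' p.
Proof. intros; apply rsum_mono; auto. intros; apply Cmod_ge_0. Qed.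

Lemma pnorm_X2_eq d p : pnorm (S (S d)) (pX2 p) = pnorm d p.
Proof.
  unfold pnorm. induction d. simpl. rewrite Cmod_0. ring.
  change (rsum (fun k => Cmod (pX2 p k)) (S (S (S d)))) with (rsum (fun k => Cmod (pX2 p k)) (S (S d)) + Cmod (p d)).
  rewrite IHd. reflexivity.
Qed.
Lemma pnorm_X2 d p : pnorm d (pX2 p) <= pnorm d p.
Proof.
  destruct d as [|[|d]]. unfold pnorm; simpl; lra. unfold pnorm; simpl. rewrite Cmod_0; pose proof (Cmod_ge_0 (p O)); lra.
  rewrite pnorm_X2_eq. apply pnorm_mono. lia.
Qed.
Lemma pnorm_aff d a b p : pnorm d (aff a b p) <= (Cmod a + Cmod b) * pnorm d p.
Proof.
  unfold aff. eapply Rle_trans. apply pnorm_add. rewrite !pnorm_scal.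
  pose proof (pnorm_X2 d p). pose proof (Cmod_ge_0 b). nra.
Qed.
Lemma pnorm_coef d p k : (k < d)%nat -> Cmod (p k) <= pnorm d p.
Proof.
  intros H. unfold pnorm. induction H; simpl. pose proof (rsum_nonneg (fun k => Cmod (p k)) k (fun _ _ => Cmod_ge_0 _)). lra.
  pose proof (Cmod_ge_0 (p m)). lra.
Qed.
Lemma pnorm_pone d : pnorm d pone <= 1.
Proof.
  unfold pnorm. induction d. simpl; lra. simpl. destruct d. simpl. rewrite Cmod_1. lra.
  simpl. rewrite Cmod_0. simpl in IHd. lra.
Qed.
Definition vec := (poly * poly)%type.
Definition vadd (x y : vec) : vec := (padd (fst x) (fst y), padd (snd x) (snd y)).
Definition vnorm d (x : vec) := pnorm d (fst x) + pnorm d (snd x).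
Definition e2 : vec := (p0, pone).

Lemma vnorm_nonneg d x : 0 <= vnorm d x.
Proof. unfold vnorm. pose proof (pnorm_nonneg d (fst x)). pose proof (pnorm_nonneg d (snd x)). lra. Qed.

Lemma pnorm_p0 d : pnorm d p0 = 0.
Proof. unfold pnorm, p0. induction d; simpl; auto. rewrite IHd, Cmod_0. ring. Qed.

Lemma vnorm_e2 d : vnorm d e2 <= 1.
Proof. unfold vnorm, e2; simpl. rewrite pnorm_p0. pose proof (pnorm_pone d). lra. Qed.

Section Sys.
Variables a1 a2 a3 a4 b1 b2 b3 b4 : Z -> C.
Variable Cst : R.
Hypothesis Cst_pos : 0 <= Cst.

Definition eps (n : Z) : R :=
  Cmod (a1 n) + Cmod (b1 n) + Cmod (a2 n) + Cmod (b2 n) + Cmod (a3 n) + Cmod (b3 n) + Cmod (a4 n) + Cmod (b4 n).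

Definition Gf (n : Z) : R := Cst / ((1 + IZR (Z.abs n)) * (2 + IZR (Z.abs n))).
Hypothesis eps_bound : forall n, eps n <= Gf n.

Lemma eps_nonneg n : 0 <= eps n.
Proof.
  unfold eps. pose proof (Cmod_ge_0 (a1 n)). pose proof (Cmod_ge_0 (a2 n)). pose proof (Cmod_ge_0 (a3 n)).
  pose proof (Cmod_ge_0 (a4 n)). pose proof (Cmod_ge_0 (b1 n)). pose proof (Cmod_ge_0 (b2 n)).
  pose proof (Cmod_ge_0 (b3 n)). pose proof (Cmod_ge_0 (b4 n)). lra.
Qed.

Definition Ff (n : Z) : R := if Z_le_dec 0 n then 2 * Cst - Cst / (IZR n + 1) else Cst / (1 - IZR n).

Lemma IZR_abs_nonneg n : 0 <= IZR (Z.abs n).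
Proof. apply IZR_le. lia. Qed.

Lemma G_le_F n : Gf n <= Ff (n + 1) - Ff n.
Proof.
  unfold Gf, Ff. destruct (Z_le_dec 0 (n + 1)), (Z_le_dec 0 n).
  - rewrite Z.abs_eq by lia. rewrite plus_IZR.
    assert (0 <= IZR n) by (apply IZR_le; lia). right. field. lra.
  - assert (n = -1)%Z by lia. subst. simpl. 
    replace (IZR (Z.abs (-1))) with 1 by reflexivity.
    replace (IZR (0)) with 0 by reflexivity.
    apply Rle_trans with (Cst / 6). right. field. apply Rle_trans with (Cst / 2). 
    unfold Rdiv. apply Rmult_le_compat_l; auto. lra. 
    rewrite IZR_NEG. right. field.
  - lia.
  - rewrite Z.abs_neq by lia. rewrite opp_IZR, plus_IZR.
    assert (IZR n <= -2). { replace (-2) with (IZR (-2)) by reflexivity. apply IZR_le. lia. }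
    set (a := - IZR n). assert (2 <= a) by (unfold a; lra).
    replace (1 - (IZR n + 1)) with a by (unfold a; ring). replace (1 - IZR n) with (1 + a) by (unfold a; ring).
    replace (Cst / a - Cst / (1 + a)) with (Cst / (a * (1 + a))) by (field; lra).
    unfold Rdiv. apply Rmult_le_compat_l; auto. apply Rinv_le_contravar. nra. nra.
Qed.

Lemma F_range n : 0 <= Ff n <= 2 * Cst.
Proof.
  unfold Ff. destruct (Z_le_dec 0 n).
  - assert (0 <= IZR n) by (apply IZR_le; lia). split.
    + assert (Cst / (IZR n + 1) <= Cst). { unfold Rdiv. rewrite <- (Rmult_1_r Cst) at 2. apply Rmult_le_compat_l; auto.
        rewrite <- Rinv_1. apply Rinv_le_contravar; lra. } lra.
    + assert (0 <= Cst / (IZR n + 1)) by (apply Rdiv_le_0_compat; lra). lra.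
  - assert (IZR n <= 0) by (apply IZR_le; lia). split. apply Rdiv_le_0_compat; lra.
    assert (Cst / (1 - IZR n) <= Cst). { unfold Rdiv. rewrite <- (Rmult_1_r Cst) at 2. apply Rmult_le_compat_l; auto.
        rewrite <- Rinv_1. apply Rinv_le_contravar; lra. } lra.
Qed.

Lemma sumG m k : rsum (fun i => Gf (m + Z.of_nat i)%Z) k <= Ff (m + Z.of_nat k) - Ff m.
Proof.
  induction k; simpl. replace (m + 0)%Z with m by lia. lra.
  pose proof (G_le_F (m + Z.of_nat k)). replace (m + Z.of_nat k + 1)%Z with (m + Z.of_nat (S k))%Z in H by lia. simpl in H. lra.
Qed.

Lemma sum_eps m k : rsum (fun i => eps (m + Z.of_nat i)%Z) k <= 2 * Cst.
Proof.
  eapply Rle_trans. apply rsum_le. intros; apply eps_bound. eapply Rle_trans. apply sumG.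
  pose proof (F_range (m + Z.of_nat k)). pose proof (F_range m). lra.
Qed.

Definition Kc := exp (2 * Cst).

Definition Dop (y : vec) : vec := (pX2 (fst y), snd y).
Definition Eop (n : Z) (y : vec) : vec :=
  (padd (aff (a1 n) (b1 n) (fst y)) (aff (a2 n) (b2 n) (snd y)),
   padd (aff (a3 n) (b3 n) (fst y)) (aff (a4 n) (b4 n) (snd y))).
Definition Lop (n : Z) (y : vec) : vec := vadd (Dop y) (Eop n y).

Lemma Eop_norm d n y : vnorm d (Eop n y) <= eps n * vnorm d y.
Proof.
  unfold vnorm, Eop; simpl.
  pose proof (pnorm_add d (aff (a1 n) (b1 n) (fst y)) (aff (a2 n) (b2 n) (snd y))).
  pose proof (pnorm_add d (aff (a3 n) (b3 n) (fst y)) (aff (a4 n) (b4 n) (snd y))).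
  pose proof (pnorm_aff d (a1 n) (b1 n) (fst y)). pose proof (pnorm_aff d (a2 n) (b2 n) (snd y)).
  pose proof (pnorm_aff d (a3 n) (b3 n) (fst y)). pose proof (pnorm_aff d (a4 n) (b4 n) (snd y)).
  pose proof (pnorm_nonneg d (fst y)). pose proof (pnorm_nonneg d (snd y)).
  unfold eps.
  pose proof (Cmod_ge_0 (a1 n)). pose proof (Cmod_ge_0 (a2 n)). pose proof (Cmod_ge_0 (a3 n)).
  pose proof (Cmod_ge_0 (a4 n)). pose proof (Cmod_ge_0 (b1 n)). pose proof (Cmod_ge_0 (b2 n)).
  pose proof (Cmod_ge_0 (b3 n)). pose proof (Cmod_ge_0 (b4 n)). nra.
Qed.

Lemma Dop_norm d y : vnorm d (Dop y) <= vnorm d y.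
Proof. unfold vnorm, Dop; simpl. pose proof (pnorm_X2 d (fst y)). lra. Qed.

Lemma Lop_norm d n y : vnorm d (Lop n y) <= (1 + eps n) * vnorm d y.
Proof.
  change (pnorm d (padd (fst (Dop y)) (fst (Eop n y))) + pnorm d (padd (snd (Dop y)) (snd (Eop n y))) <= (1 + eps n) * vnorm d y).
  pose proof (pnorm_add d (fst (Dop y)) (fst (Eop n y))). pose proof (pnorm_add d (snd (Dop y)) (snd (Eop n y))).
  pose proof (Eop_norm d n y). pose proof (Dop_norm d y). unfold vnorm in *. pose proof (eps_nonneg n). nra.
Qed.

Fixpoint Prod (m : Z) (k : nat) (y : vec) : vec :=
  match k with O => y | S k => Lop m (Prod (m + 1)%Z k y) end.

Lemma Prod_last m k y : Prod m (S k) y = Prod m k (Lop (m + Z.of_nat k)%Z y).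
Proof.
  revert m. induction k; intros m. simpl. replace (m + 0)%Z with m by lia. auto.
  change (Prod m (S (S k)) y) with (Lop m (Prod (m + 1)%Z (S k) y)). rewrite IHk.
  simpl. f_equal. f_equal. f_equal. lia.
Qed.

Lemma Prod_norm d m k y : vnorm d (Prod m k y) <= exp (rsum (fun i => eps (m + Z.of_nat i)%Z) k) * vnorm d y.
Proof.
  revert m. induction k; intros m; simpl. rewrite exp_0. lra.
  eapply Rle_trans. apply Lop_norm.
  assert (Hs : rsum (fun i => eps (m + Z.of_nat i)%Z) (S k) = eps m + rsum (fun i => eps (m + 1 + Z.of_nat i)%Z) k).
  { clear IHk. induction k. simpl. replace (m + 0)%Z with m by lia. ring.
    change (rsum (fun i => eps (m + Z.of_nat i)%Z) (S (S k))) with (rsum (fun i => eps (m + Z.of_nat i)%Z) (S k) + eps (m + Z.of_nat (S k))%Z).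
    rewrite IHk. simpl. replace (m + 1 + Z.of_nat k)%Z with (m + Z.pos (Pos.of_succ_nat k))%Z by lia. ring. }
  simpl in Hs. rewrite Hs, exp_plus.
  pose proof (IHk (m + 1)%Z). pose proof (eps_nonneg m).
  assert (1 + eps m <= exp (eps m)). { destruct (Req_dec (eps m) 0). rewrite H1, exp_0; lra. pose proof (exp_ineq1 _ H1). lra. }
  pose proof (vnorm_nonneg d (Prod (m + 1) k y)).
  pose proof (exp_pos (eps m)).
  apply Rle_trans with (exp (eps m) * vnorm d (Prod (m + 1) k y)). apply Rmult_le_compat_r; auto.
  rewrite Rmult_assoc. apply Rmult_le_compat_l; lra.
Qed.

Lemma exp_mono x y : x <= y -> exp x <= exp y.
Proof. intros [H|H]. left. apply exp_increasing; auto. subst; lra. Qed.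

Lemma Prod_normK d m k y : vnorm d (Prod m k y) <= Kc * vnorm d y.
Proof.
  eapply Rle_trans. apply Prod_norm. apply Rmult_le_compat_r. apply vnorm_nonneg.
  apply exp_mono. apply sum_eps.
Qed.

Lemma Lop_lin n y w : Lop n (vadd y w) = vadd (Lop n y) (Lop n w).
Proof.
  destruct y as [y1 y2], w as [w1 w2]. unfold Lop, vadd, Dop, Eop, aff, padd, pscal, pX2; simpl.
  f_equal; apply functional_extensionality; intros k; destruct k as [|[|k]]; ring.
Qed.

Lemma Prod_lin m k y w : Prod m k (vadd y w) = vadd (Prod m k y) (Prod m k w).
Proof. revert m. induction k; intros m; simpl; auto. rewrite IHk. apply Lop_lin. Qed.

Lemma Dop_e2 : Dop e2 = e2.
Proof. unfold Dop, e2; simpl. f_equal. apply functional_extensionality; intros [|[|k]]; reflexivity. Qed.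

Definition Apol (N : nat) : poly := snd (Prod (- Z.of_nat N) (2 * N + 1) e2).

Lemma Apol_step_bound d N : pnorm d (psub (Apol (S N)) (Apol N)) <= Kc * (1 + Cst) * (2 * Gf (Z.of_nat (S N))).
Proof.
  unfold Apol.
  replace (2 * S N + 1)%nat with (S (S (2 * N + 1))) by lia.
  change (Prod (- Z.of_nat (S N)) (S (S (2 * N + 1))) e2) with (Lop (- Z.of_nat (S N)) (Prod (- Z.of_nat (S N) + 1) (S (2 * N + 1)) e2)).
  replace (- Z.of_nat (S N) + 1)%Z with (- Z.of_nat N)%Z by lia.
  rewrite Prod_last.
  replace (- Z.of_nat N + Z.of_nat (2 * N + 1))%Z with (Z.of_nat (S N)) by lia.
  set (n1 := Z.of_nat (S N)). set (P := Prod (- Z.of_nat N) (2 * N + 1)).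
  assert (Hl : Lop n1 e2 = vadd e2 (Eop n1 e2)). { unfold Lop. rewrite Dop_e2. auto. }
  rewrite Hl. unfold P. rewrite Prod_lin. fold P.
  set (Y := vadd (P e2) (P (Eop n1 e2))).
  assert (psub (snd (Lop (- n1) Y)) (snd (P e2)) = padd (snd (P (Eop n1 e2))) (snd (Eop (- n1) Y))).
  { unfold Lop, Y, vadd, Dop, psub, padd; simpl. apply functional_extensionality; intros k. ring. }
  replace (- Z.of_nat (S N))%Z with (- n1)%Z by auto.
  rewrite H. eapply Rle_trans. apply pnorm_add.
  assert (H1 : pnorm d (snd (P (Eop n1 e2))) <= Kc * (eps n1 * 1)).
  { eapply Rle_trans with (vnorm d (P (Eop n1 e2))). unfold vnorm. pose proof (pnorm_nonneg d (fst (P (Eop n1 e2)))). lra.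
    eapply Rle_trans. apply Prod_normK. apply Rmult_le_compat_l. unfold Kc; pose proof (exp_pos (2 * Cst)); lra.
    eapply Rle_trans. apply Eop_norm. apply Rmult_le_compat_l. apply eps_nonneg. apply vnorm_e2. }
  assert (H2 : pnorm d (snd (Eop (- n1) Y)) <= eps (- n1) * (Kc * (1 + eps n1))).
  { eapply Rle_trans with (vnorm d (Eop (- n1) Y)). unfold vnorm. pose proof (pnorm_nonneg d (fst (Eop (- n1) Y))). lra.
    eapply Rle_trans. apply Eop_norm. apply Rmult_le_compat_l. apply eps_nonneg.
    unfold Y, P. rewrite <- Prod_lin. rewrite <- Hl. eapply Rle_trans. apply Prod_normK.
    apply Rmult_le_compat_l. unfold Kc; pose proof (exp_pos (2 * Cst)); lra.
    eapply Rle_trans. apply Lop_norm. pose proof (vnorm_e2 d). pose proof (eps_nonneg n1). nra. }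
  assert (HG : Gf (- n1) = Gf n1). { unfold Gf. rewrite Z.abs_opp. auto. }
  assert (He1 : eps n1 <= Gf n1) by apply eps_bound.
  assert (He2 : eps (- n1) <= Gf n1) by (rewrite <- HG; apply eps_bound).
  assert (HGc : Gf n1 <= Cst).
  { unfold Gf. pose proof (IZR_abs_nonneg n1). unfold Rdiv. rewrite <- (Rmult_1_r Cst) at 2.
    apply Rmult_le_compat_l; auto. rewrite <- Rinv_1. apply Rinv_le_contravar; nra. }
  pose proof (eps_nonneg n1). pose proof (eps_nonneg (- n1)).
  assert (0 < Kc) by (unfold Kc; apply exp_pos).
  assert (eps (- n1) * (Kc * (1 + eps n1)) <= Gf n1 * (Kc * (1 + Cst))).
  { apply Rmult_le_compat; try nra. }
  assert (0 <= Gf n1) by lra.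
  assert (Kc * eps n1 <= Kc * (1 + Cst) * Gf n1).
  { apply Rle_trans with (Kc * Gf n1). apply Rmult_le_compat_l; lra. 
    rewrite Rmult_assoc. apply Rmult_le_compat_l. lra. nra. }
  nra.
Qed.

Definition delta (N : nat) : R := Kc * (1 + Cst) * (2 * Cst) / (INR N + 1).

Lemma delta_nonneg N : 0 <= delta N.
Proof.
  unfold delta. assert (0 < Kc) by (unfold Kc; apply exp_pos). pose proof (pos_INR N).
  apply Rdiv_le_0_compat; [|lra]. apply Rmult_le_pos; [|lra]. apply Rmult_le_pos; lra.
Qed.

Lemma delta_lim : forall e, 0 < e -> exists N, forall n, (N <= n)%nat -> delta n <= e.
Proof.
  intros e He. set (M := Kc * (1 + Cst) * (2 * Cst)).
  assert (0 <= M) by (unfold M; assert (0 < Kc) by (unfold Kc; apply exp_pos); apply Rmult_le_pos; [apply Rmult_le_pos|]; lra).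
  destruct (archimed (M / e)) as [H1 _].
  exists (Z.to_nat (up (M / e))). intros n Hn. unfold delta. fold M.
  assert (M / e <= INR n).
  { apply Rle_trans with (IZR (up (M / e))). lra. 
    destruct (Z_le_dec 0 (up (M / e))). rewrite <- (Z2Nat.id (up (M / e))) by auto. rewrite <- INR_IZR_INZ. apply le_INR. auto.
    apply Rle_trans with 0. apply IZR_le; lia. apply pos_INR. }
  apply Rle_trans with (M / (M / e + 1)).
  - destruct (Req_dec M 0). rewrite H2. unfold Rdiv; rewrite !Rmult_0_l; lra.
    unfold Rdiv. apply Rmult_le_compat_l; auto. apply Rinv_le_contravar. 
    assert (0 <= M / e) by (apply Rdiv_le_0_compat; lra). lra. lra.
  - destruct (Req_dec M 0). rewrite H2. unfold Rdiv; rewrite !Rmult_0_l; lra.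
    assert (0 < M / e) by (apply Rdiv_lt_0_compat; lra).
    apply Rle_trans with (M / (M / e)). unfold Rdiv at 1 2. apply Rmult_le_compat_l; auto. apply Rinv_le_contravar; lra.
    right. field. split; lra.
Qed.

Lemma Apol_cauchy d N N' : (N <= N')%nat -> pnorm d (psub (Apol N') (Apol N)) <= delta N.
Proof.
  intros H. 
  assert (forall j, pnorm d (psub (Apol (N + j)) (Apol N)) <= Kc * (1 + Cst) * 2 * (Ff (Z.of_nat (N + j) + 1) - Ff (Z.of_nat N + 1))).
  { induction j.
    - replace (N + 0)%nat with N by lia. 
      assert (psub (Apol N) (Apol N) = p0). { apply functional_extensionality; intros; unfold psub, p0. ring. }
      rewrite H0, pnorm_p0. lra.
    - replace (N + S j)%nat with (S (N + j)) by lia.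
      assert (psub (Apol (S (N + j))) (Apol N) = padd (psub (Apol (S (N + j))) (Apol (N + j))) (psub (Apol (N + j)) (Apol N))).
      { apply functional_extensionality; intros; unfold psub, padd. ring. }
      rewrite H0. eapply Rle_trans. apply pnorm_add.
      pose proof (Apol_step_bound d (N + j)). pose proof (G_le_F (Z.of_nat (S (N + j)))).
      replace (Z.of_nat (S (N + j))) with (Z.of_nat (N + j) + 1)%Z in * by lia.
      assert (0 < Kc) by (unfold Kc; apply exp_pos).
      assert (Kc * (1 + Cst) * (2 * Gf (Z.of_nat (N + j) + 1)) <= Kc * (1 + Cst) * 2 * (Ff (Z.of_nat (N + j) + 1 + 1) - Ff (Z.of_nat (N + j) + 1))).
      { replace (Kc * (1 + Cst) * 2 * (Ff (Z.of_nat (N + j) + 1 + 1) - Ff (Z.of_nat (N + j) + 1))) with (Kc * (1 + Cst) * (2 * (Ff (Z.of_nat (N + j) + 1 + 1) - Ff (Z.of_nat (N + j) + 1)))) by ring.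
        apply Rmult_le_compat_l. nra. lra. }
      nra. }
  replace N' with (N + (N' - N))%nat by lia. eapply Rle_trans. apply H0.
  pose proof (F_range (Z.of_nat (N + (N' - N)) + 1)).
  assert (Ff (Z.of_nat N + 1) = 2 * Cst - Cst / (INR N + 2)).
  { unfold Ff. destruct Z_le_dec; [|lia]. rewrite plus_IZR, <- INR_IZR_INZ. f_equal. f_equal. ring. }
  rewrite H2. unfold delta.
  assert (0 < Kc) by (unfold Kc; apply exp_pos). pose proof (pos_INR N).
  assert (Cst / (INR N + 2) <= Cst / (INR N + 1)).
  { unfold Rdiv. apply Rmult_le_compat_l; auto. apply Rinv_le_contravar; lra. }
  replace (Kc * (1 + Cst) * (2 * Cst) / (INR N + 1)) with (Kc * (1 + Cst) * 2 * (Cst / (INR N + 1))) by (field; lra).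
  apply Rmult_le_compat_l. nra. lra.
Qed.

Lemma Apol_bound d N : pnorm d (Apol N) <= Kc.
Proof.
  unfold Apol. eapply Rle_trans with (vnorm d (Prod (- Z.of_nat N) (2 * N + 1) e2)).
  unfold vnorm. pose proof (pnorm_nonneg d (fst (Prod (- Z.of_nat N) (2 * N + 1) e2))). lra.
  eapply Rle_trans. apply Prod_normK. pose proof (vnorm_e2 d). assert (0 < Kc) by (unfold Kc; apply exp_pos). nra.
Qed.


Definition pev (d : nat) (p : poly) (z : C) : C := csum (fun k => (p k * Cpow z k)%C) d.
Definition psupp (p : poly) (s : nat) := forall k, (s <= k)%nat -> p k = RtoC 0.
Definition vsupp (y : vec) s := psupp (fst y) s /\ psupp (snd y) s.

Lemma pev_supp p s d z : psupp p s -> (s <= d)%nat -> pev d p z = pev s p z.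
Proof.
  intros Hp H. induction H; auto. unfold pev in *. simpl. rewrite IHle. rewrite Hp by lia. ring.
Qed.

Lemma pev_bound d p z : Cmod z <= 1 -> Cmod (pev d p z) <= pnorm d p.
Proof.
  intros Hz. unfold pev, pnorm. eapply Rle_trans. apply csum_Cmod. apply rsum_le. intros.
  rewrite Cmod_mult. pose proof (Cmod_pow_le1 z k Hz). pose proof (Cmod_ge_0 (p k)).
  pose proof (Cmod_ge_0 (Cpow z k)). nra.
Qed.

Lemma pev_add d p q z : pev d (padd p q) z = (pev d p z + pev d q z)%C.
Proof. unfold pev, padd. rewrite <- csum_plus. apply csum_ext. intros; ring. Qed.
Lemma pev_sub d p q z : pev d (psub p q) z = (pev d p z - pev d q z)%C.
Proof. unfold pev, psub. rewrite <- csum_minus. apply csum_ext. intros; ring. Qed.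
Lemma pev_scal d a p z : pev d (pscal a p) z = (a * pev d p z)%C.
Proof. unfold pev, pscal. rewrite <- csum_scal. apply csum_ext. intros; ring. Qed.
Lemma pev_X2 d p z : pev (S (S d)) (pX2 p) z = (z * z * pev d p z)%C.
Proof.
  unfold pev. induction d. simpl. ring.
  change (csum (fun k => (pX2 p k * Cpow z k)%C) (S (S (S d)))) with
    (csum (fun k => (pX2 p k * Cpow z k)%C) (S (S d)) + pX2 p (S (S d)) * Cpow z (S (S d)))%C.
  rewrite IHd. simpl. ring.
Qed.

Lemma psupp_mono p s s' : psupp p s -> (s <= s')%nat -> psupp p s'.
Proof. intros H H1 k Hk. apply H. lia. Qed.
Lemma psupp_add p q s : psupp p s -> psupp q s -> psupp (padd p q) s.
Proof. intros H1 H2 k Hk. unfold padd. rewrite H1, H2 by auto. ring. Qed.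
Lemma psupp_scal a p s : psupp p s -> psupp (pscal a p) s.
Proof. intros H1 k Hk. unfold pscal. rewrite H1 by auto. ring. Qed.
Lemma psupp_X2 p s : psupp p s -> psupp (pX2 p) (s + 2).
Proof. intros H1 k Hk. destruct k as [|[|k]]; try lia. simpl. apply H1. lia. Qed.
Lemma psupp_aff a b p s : psupp p s -> psupp (aff a b p) (s + 2).
Proof.
  intros H. unfold aff. apply psupp_add. apply psupp_scal. eapply psupp_mono; eauto; lia.
  apply psupp_scal. apply psupp_X2; auto.
Qed.

Lemma vsupp_Lop n y s : vsupp y s -> vsupp (Lop n y) (s + 2).
Proof.
  intros [H1 H2]. unfold Lop, vadd, Dop, Eop; simpl. split.
  - apply psupp_add. apply psupp_X2; auto. apply psupp_add; apply psupp_aff; auto.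
  - apply psupp_add. eapply psupp_mono; eauto; lia. apply psupp_add; apply psupp_aff; auto.
Qed.

Lemma vsupp_Prod m k y s : vsupp y s -> vsupp (Prod m k y) (s + 2 * k).
Proof.
  revert m. induction k; intros m H; simpl. replace (s + 0)%nat with s by lia; auto.
  replace (s + S (k + S (k + 0)))%nat with (s + 2 * k + 2)%nat by lia. apply vsupp_Lop. auto.
Qed.

Lemma vsupp_e2 : vsupp e2 1.
Proof. split; intros k Hk; simpl. reflexivity. unfold pone. destruct k; [lia|reflexivity]. Qed.

Definition Lfun (n : Z) (z : C) (x : C * C) : C * C :=
  ((z * z * fst x + (a1 n + b1 n * (z * z)) * fst x + (a2 n + b2 n * (z * z)) * snd x)%C,
   (snd x + (a3 n + b3 n * (z * z)) * fst x + (a4 n + b4 n * (z * z)) * snd x)%C).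

Definition vev d (y : vec) z : C * C := (pev d (fst y) z, pev d (snd y) z).

Lemma pev_aff a b p s z : psupp p s -> pev (s + 2) (aff a b p) z = ((a + b * (z * z)) * pev s p z)%C.
Proof.
  intros H. unfold aff. rewrite pev_add, !pev_scal. replace (s + 2)%nat with (S (S s)) by lia.
  rewrite pev_X2. rewrite (pev_supp p s (S (S s))) by (auto; lia). ring.
Qed.

Lemma vev_Lop n y s z : vsupp y s -> vev (s + 2) (Lop n y) z = Lfun n z (vev s y z).
Proof.
  intros [H1 H2]. unfold vev, Lfun, Lop, vadd, Dop, Eop; simpl. f_equal.
  - rewrite !pev_add, !pev_aff by auto. replace (s + 2)%nat with (S (S s)) by lia. rewrite pev_X2. ring.
  - rewrite !pev_add, !pev_aff by auto. rewrite (pev_supp (snd y) s (s + 2)) by (auto; lia). ring.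
Qed.

Fixpoint Pfun (m : Z) (k : nat) (x : C * C) (z : C) : C * C :=
  match k with O => x | S k => Lfun m z (Pfun (m + 1)%Z k x z) end.

Lemma vev_Prod m k y s z : vsupp y s -> vev (s + 2 * k) (Prod m k y) z = Pfun m k (vev s y z) z.
Proof.
  revert m. induction k; intros m H; simpl. replace (s + 0)%nat with s by lia; auto.
  replace (s + S (k + S (k + 0)))%nat with (s + 2 * k + 2)%nat by lia.
  rewrite vev_Lop. rewrite IHk; auto. apply vsupp_Prod; auto.
Qed.

Definition dA (N : nat) : nat := (1 + 2 * (2 * N + 1))%nat.
Definition Afun (N : nat) (z : C) : C := snd (Pfun (- Z.of_nat N) (2 * N + 1) (RtoC 0, RtoC 1) z).

Lemma vev_e2 z : vev 1 e2 z = (RtoC 0, RtoC 1).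
Proof. unfold vev, e2, pev; simpl. f_equal; unfold p0, pone; ring. Qed.

Lemma Afun_pev N z : Afun N z = pev (dA N) (Apol N) z.
Proof.
  unfold Afun, Apol, dA. rewrite <- (vev_e2 z). rewrite <- vev_Prod by apply vsupp_e2. reflexivity.
Qed.

Lemma Apol_supp N : psupp (Apol N) (dA N).
Proof. unfold Apol, dA. apply (vsupp_Prod _ _ e2 1 vsupp_e2). Qed.

Lemma dA_mono N N' : (N <= N')%nat -> (dA N <= dA N')%nat.
Proof. unfold dA; lia. Qed.

Lemma Afun_cauchy N N' z : (N <= N')%nat -> Cmod z <= 1 -> Cmod (Afun N' z - Afun N z) <= delta N.
Proof.
  intros H Hz. rewrite !Afun_pev. rewrite <- (pev_supp (Apol N) (dA N) (dA N')) by (auto using Apol_supp, dA_mono).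
  rewrite <- pev_sub. eapply Rle_trans. apply pev_bound; auto. apply Apol_cauchy; auto.
Qed.

Definition Acl (z : C) : C := clim (fun N => Afun N z).

Lemma Acl_conv z : Cmod z <= 1 -> cconv (fun N => Afun N z) (Acl z).
Proof.
  intros Hz. apply clim_spec. apply C_cauchy. intros e He. destruct (delta_lim e He) as [N HN].
  exists N. intros n m Hn Hm. destruct (le_lt_dec n m).
  - rewrite Cmod_sub_sym. eapply Rle_trans. apply Afun_cauchy; auto. auto.
  - eapply Rle_trans. apply Afun_cauchy; auto; lia. auto.
Qed.

Lemma Acl_dist N z : Cmod z <= 1 -> Cmod (Afun N z - Acl z) <= delta N.
Proof.
  intros Hz. rewrite Cmod_sub_sym. apply cconv_dist with (fun n => Afun n z). apply Acl_conv; auto.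
  exists N. intros. apply Afun_cauchy; auto.
Qed.

Lemma Cpow_diff (w u : C) k : Cmod w <= 1 -> Cmod u <= 1 -> Cmod (Cpow w k - Cpow u k) <= INR k * Cmod (w - u).
Proof.
  intros Hw Hu. induction k. simpl. replace (1 - 1)%C with (RtoC 0) by ring. rewrite Cmod_0. lra.
  simpl Cpow. replace (w * Cpow w k - u * Cpow u k)%C with (w * (Cpow w k - Cpow u k) + Cpow u k * (w - u))%C by ring.
  eapply Rle_trans. apply Cmod_triangle. rewrite !Cmod_mult. rewrite S_INR.
  pose proof (Cmod_pow_le1 u k Hu). pose proof (Cmod_ge_0 w). pose proof (Cmod_ge_0 (w - u)).
  pose proof (Cmod_ge_0 (Cpow w k - Cpow u k)). pose proof (Cmod_ge_0 (Cpow u k)).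
  assert (Cmod w * Cmod (Cpow w k - Cpow u k) <= Cmod (Cpow w k - Cpow u k)) by nra.
  assert (Cmod (Cpow u k) * Cmod (w - u) <= Cmod (w - u)) by nra. lra.
Qed.

Lemma pev_cont d p w u : Cmod w <= 1 -> Cmod u <= 1 -> Cmod (pev d p w - pev d p u) <= INR d * Cmod (w - u) * pnorm d p.
Proof.
  intros Hw Hu. unfold pev. rewrite <- csum_minus. eapply Rle_trans. apply csum_Cmod.
  unfold pnorm. rewrite <- rsum_scal. apply rsum_le. intros k Hk.
  replace (p k * Cpow w k - p k * Cpow u k)%C with (p k * (Cpow w k - Cpow u k))%C by ring.
  rewrite Cmod_mult. pose proof (Cpow_diff w u k Hw Hu). pose proof (Cmod_ge_0 (p k)).
  assert (INR k <= INR d) by (apply le_INR; lia). pose proof (Cmod_ge_0 (w - u)). pose proof (pos_INR k).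
  apply Rle_trans with (Cmod (p k) * (INR k * Cmod (w - u))). apply Rmult_le_compat_l; auto.
  rewrite Rmult_comm. apply Rmult_le_compat_r; auto. apply Rmult_le_compat_r; auto.
Qed.

Lemma Acl_cont z : Cmod z <= 1 -> forall e, 0 < e -> exists dl, 0 < dl /\
  forall w, Cmod w <= 1 -> Cmod (w - z) < dl -> Cmod (Acl w - Acl z) <= e.
Proof.
  intros Hz e He. destruct (delta_lim (e / 3) ltac:(lra)) as [N HN]. specialize (HN N (le_n _)).
  set (M := INR (dA N) * Kc + 1).
  assert (HM : 0 < M) by (unfold M; pose proof (pos_INR (dA N)); assert (0 < Kc) by (unfold Kc; apply exp_pos); nra).
  exists (e / 3 / M). split. apply Rdiv_lt_0_compat; lra.
  intros w Hw Hwz.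
  pose proof (Acl_dist N w Hw). pose proof (Acl_dist N z Hz).
  assert (Cmod (Afun N w - Afun N z) <= e / 3).
  { rewrite !Afun_pev. eapply Rle_trans. apply pev_cont; auto.
    pose proof (Apol_bound (dA N) N). pose proof (pnorm_nonneg (dA N) (Apol N)). pose proof (pos_INR (dA N)).
    pose proof (Cmod_ge_0 (w - z)).
    apply Rle_trans with (INR (dA N) * Cmod (w - z) * Kc). apply Rmult_le_compat_l; auto. apply Rmult_le_pos; auto.
    apply Rle_trans with (M * Cmod (w - z)). unfold M. nra.
    apply Rle_trans with (M * (e / 3 / M)). apply Rmult_le_compat_l; lra. right. field. lra. }
  pose proof (Cmod_tri3 (Acl w) (Afun N w) (Acl z)). pose proof (Cmod_tri3 (Afun N w) (Afun N z) (Acl z)).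
  rewrite Cmod_sub_sym in H. lra.
Qed.

Definition ccoef (k : nat) : C := clim (fun N => Apol N k).

Lemma ccoef_conv k : cconv (fun N => Apol N k) (ccoef k).
Proof.
  apply clim_spec. apply C_cauchy. intros e He. destruct (delta_lim e He) as [N HN].
  exists N. intros n m Hn Hm.
  assert (forall a b, (N <= a)%nat -> (a <= b)%nat -> Cmod (Apol b k - Apol a k) <= e).
  { intros a b Ha Hb. eapply Rle_trans. apply (pnorm_coef (S k) (psub (Apol b) (Apol a)) k). lia.
    eapply Rle_trans. apply Apol_cauchy; auto. auto. }
  destruct (le_lt_dec n m). rewrite Cmod_sub_sym. auto. apply H; lia.
Qed.

Lemma ccoef_dist N k : Cmod (Apol N k - ccoef k) <= delta N.
Proof.
  rewrite Cmod_sub_sym. apply cconv_dist with (fun n => Apol n k). apply ccoef_conv.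
  exists N. intros n Hn. eapply Rle_trans. apply (pnorm_coef (S k) (psub (Apol n) (Apol N)) k). lia.
  apply Apol_cauchy; auto.
Qed.

Lemma ccoef_bound k : Cmod (ccoef k) <= Kc.
Proof.
  apply cconv_le with (fun N => Apol N k). apply ccoef_conv. exists O. intros n _.
  eapply Rle_trans. apply (pnorm_coef (S k) (Apol n) k). lia. apply Apol_bound.
Qed.

Lemma Acl_series z : Cmod z < 1 -> cconv (fun K => csum (fun k => (ccoef k * Cpow z k)%C) K) (Acl z).
Proof.
  intros Hz e He.
  set (t := / (1 - Cmod z) + 1).
  assert (Ht : 0 < t). { unfold t. pose proof (Rinv_0_lt_compat (1 - Cmod z) ltac:(lra)). lra. }
  destruct (delta_lim (e / t) ltac:(apply Rdiv_lt_0_compat; lra)) as [N HN]. specialize (HN N (le_n _)).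
  exists (dA N). intros K HK.
  pose proof (Acl_dist N z ltac:(lra)).
  assert (Cmod (csum (fun k => (ccoef k * Cpow z k)%C) K - Afun N z) <= delta N / (1 - Cmod z)).
  { rewrite Afun_pev. rewrite <- (pev_supp (Apol N) (dA N) K) by (auto using Apol_supp).
    unfold pev. rewrite <- csum_minus. eapply Rle_trans. apply csum_Cmod.
    apply Rle_trans with (rsum (fun k => delta N * Cmod z ^ k) K).
    apply rsum_le. intros k _. replace (ccoef k * Cpow z k - Apol N k * Cpow z k)%C with ((ccoef k - Apol N k) * Cpow z k)%C by ring.
    rewrite Cmod_mult, Cmod_pow. rewrite Cmod_sub_sym. apply Rmult_le_compat_r. apply pow_le, Cmod_ge_0. apply ccoef_dist.
    rewrite rsum_scal. unfold Rdiv. apply Rmult_le_compat_l. apply delta_nonneg. apply rsum_geom_le.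
    split; auto. apply Cmod_ge_0. }
  pose proof (Cmod_tri3 (csum (fun k => (ccoef k * Cpow z k)%C) K) (Afun N z) (Acl z)).
  assert (delta N / (1 - Cmod z) + delta N = delta N * t) by (unfold t; field; lra).
  assert (delta N * t <= e). { apply Rle_trans with (e / t * t). apply Rmult_le_compat_r; lra. right; field; lra. }
  lra.
Qed.

Definition pconst (c : C) : poly := fun k => match k with O => c | _ => RtoC 0 end.

Lemma pnorm_pconst d c : pnorm d (pconst c) <= Cmod c.
Proof.
  unfold pnorm. induction d. simpl. apply Cmod_ge_0. simpl. destruct d. simpl. lra.
  simpl. rewrite Cmod_0. simpl in IHd. lra.
Qed.

Lemma psupp_pconst c : psupp (pconst c) 1.
Proof. intros k Hk. unfold pconst. destruct k; [lia|auto]. Qed.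

Lemma pev_pconst c z : pev 1 (pconst c) z = c.
Proof. unfold pev, pconst; simpl. ring. Qed.

Lemma Pfun_bound m k x z : Cmod z <= 1 -> Cmod (snd (Pfun m k x z)) <= Kc * (Cmod (fst x) + Cmod (snd x)).
Proof.
  intros Hz. set (y := (pconst (fst x), pconst (snd x))).
  assert (Hy : vsupp y 1) by (split; apply psupp_pconst).
  assert (vev 1 y z = x). { unfold vev, y; simpl. rewrite !pev_pconst. destruct x; auto. }
  assert (Pfun m k x z = vev (1 + 2 * k) (Prod m k y) z). { rewrite vev_Prod by auto. rewrite H. auto. }
  rewrite H0. unfold vev; cbn [fst snd].
  eapply Rle_trans. apply pev_bound; auto.
  apply Rle_trans with (vnorm (1 + 2 * k) (Prod m k y)).
  { unfold vnorm. pose proof (pnorm_nonneg (1 + 2 * k) (fst (Prod m k y))). lra. }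
  eapply Rle_trans. apply Prod_normK. apply Rmult_le_compat_l. unfold Kc; pose proof (exp_pos (2 * Cst)); lra.
  unfold vnorm, y; cbn [fst snd]. pose proof (pnorm_pconst (1 + 2 * k) (fst x)). pose proof (pnorm_pconst (1 + 2 * k) (snd x)). lra.
Qed.

Definition csub2 (x y : C * C) : C * C := ((fst x - fst y)%C, (snd x - snd y)%C).

Lemma Pfun_lin m k x y z : Pfun m k (csub2 x y) z = csub2 (Pfun m k x z) (Pfun m k y z).
Proof.
  revert m. induction k; intros m; simpl; auto. rewrite IHk. unfold Lfun, csub2; simpl. f_equal; ring.
Qed.

Lemma Pfun_sol (x : Z -> C * C) z : (forall n, x n = Lfun n z (x (n + 1)%Z)) ->
  forall k m, x m = Pfun m k (x (m + Z.of_nat k)%Z) z.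
Proof.
  intros H k. induction k; intros m. simpl. f_equal; lia.
  change (Pfun m (S k) (x (m + Z.of_nat (S k))%Z) z) with (Lfun m z (Pfun (m + 1)%Z k (x (m + Z.of_nat (S k))%Z) z)).
  replace (m + Z.of_nat (S k))%Z with (m + 1 + Z.of_nat k)%Z by lia.
  rewrite <- (IHk (m + 1)%Z). apply H.
Qed.

Lemma Acl_jost z (x : Z -> C * C) V : Cmod z <= 1 ->
  (forall n, x n = Lfun n z (x (n + 1)%Z)) ->
  (forall e, 0 < e -> exists N, forall n, (N <= n)%Z -> Cmod (fst (x n)) + Cmod (snd (x n) - 1) <= e) ->
  (forall e, 0 < e -> exists N, forall n, (n <= N)%Z -> Cmod (snd (x n) - V) <= e) ->
  Acl z = V.
Proof.
  intros Hz Hs Hp Hm. apply (cconv_unique (fun N => Afun N z)). apply Acl_conv; auto.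
  intros e He.
  assert (HK : 0 < Kc) by (unfold Kc; apply exp_pos).
  destruct (Hp (e / 2 / Kc)) as [N1 HN1]. apply Rdiv_lt_0_compat; lra.
  destruct (Hm (e / 2)) as [N2 HN2]. lra.
  exists (Z.to_nat (Z.abs N1 + Z.abs N2)). intros N HN.
  pose proof (Pfun_sol x z Hs (2 * N + 1) (- Z.of_nat N)).
  replace (- Z.of_nat N + Z.of_nat (2 * N + 1))%Z with (Z.of_nat N + 1)%Z in H by lia.
  assert (Afun N z - snd (x (- Z.of_nat N)%Z) = snd (Pfun (- Z.of_nat N) (2 * N + 1) (csub2 (RtoC 0, RtoC 1) (x (Z.of_nat N + 1)%Z)) z))%C.
  { rewrite Pfun_lin. unfold Afun. rewrite <- H. reflexivity. }
  pose proof (Pfun_bound (- Z.of_nat N) (2 * N + 1) (csub2 (RtoC 0, RtoC 1) (x (Z.of_nat N + 1)%Z)) z Hz).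
  rewrite <- H0 in H1. unfold csub2 in H1; simpl in H1.
  rewrite Cmod_sub_sym in H1. replace (0 - fst (x (Z.of_nat N + 1)%Z))%C with (- fst (x (Z.of_nat N + 1)%Z))%C in H1 by ring.
  rewrite Cmod_opp in H1. rewrite (Cmod_sub_sym 1) in H1.
  specialize (HN1 (Z.of_nat N + 1)%Z ltac:(lia)). specialize (HN2 (- Z.of_nat N)%Z ltac:(lia)).
  pose proof (Cmod_tri3 (Afun N z) (snd (x (- Z.of_nat N)%Z)) V).
  assert (Kc * (Cmod (fst (x (Z.of_nat N + 1)%Z)) + Cmod (snd (x (Z.of_nat N + 1)%Z) - 1)) <= e / 2).
  { apply Rle_trans with (Kc * (e / 2 / Kc)). apply Rmult_le_compat_l; lra. right; field; lra. }
  rewrite (Cmod_sub_sym (snd _)) in H1. lra.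
Qed.

End Sys.

Open Scope R_scope.

Lemma rsum_const a n : rsum (fun _ => a) n = INR n * a.
Proof. induction n. simpl; ring. simpl rsum. rewrite IHn, S_INR. ring. Qed.

Definition psum (c : nat -> C) (z : C) (K : nat) : C := csum (fun k => (c k * Cpow z k)%C) K.
Definition PS (c : nat -> C) (z : C) : C := clim (psum c z).

Definition cbnd (c : nat -> C) (B : R) := forall k, Cmod (c k) <= B.

Lemma psum_tail c B z n t : cbnd c B -> Cmod z < 1 ->
  Cmod (psum c z (n + t) - psum c z n) <= B * Cmod z ^ n / (1 - Cmod z).
Proof.
  intros Hc Hz. unfold psum. rewrite csum_split.
  replace (csum (fun k => (c k * Cpow z k)%C) n + csum (fun k => (c (n + k)%nat * Cpow z (n + k))%C) t -
     csum (fun k => (c k * Cpow z k)%C) n)%C with (csum (fun k => (c (n + k)%nat * Cpow z (n + k))%C) t) by ring.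
  eapply Rle_trans. apply csum_Cmod.
  apply Rle_trans with (rsum (fun k => B * Cmod z ^ n * Cmod z ^ k) t).
  { apply rsum_le. intros k _. rewrite Cmod_mult, Cmod_pow, pow_add.
    pose proof (Hc (n + k)%nat). pose proof (pow_le (Cmod z) n (Cmod_ge_0 _)). pose proof (pow_le (Cmod z) k (Cmod_ge_0 _)).
    rewrite <- Rmult_assoc. apply Rmult_le_compat_r; auto. apply Rmult_le_compat_r; auto. }
  rewrite rsum_scal. unfold Rdiv. 
  assert (0 <= B). { pose proof (Hc O). pose proof (Cmod_ge_0 (c O)). lra. }
  apply Rmult_le_compat_l. pose proof (pow_le (Cmod z) n (Cmod_ge_0 _)). nra.
  apply rsum_geom_le. split; auto. apply Cmod_ge_0.
Qed.

Lemma PS_conv c B z : cbnd c B -> Cmod z < 1 -> cconv (psum c z) (PS c z).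
Proof.
  intros Hc Hz. apply clim_spec. apply C_cauchy. intros e He.
  assert (0 <= B). { pose proof (Hc O). pose proof (Cmod_ge_0 (c O)). lra. }
  destruct (pow_lim0 (Cmod z) (conj (Cmod_ge_0 z) Hz) (e * (1 - Cmod z) / (B + 1))) as [N HN].
  { apply Rdiv_lt_0_compat; [|lra]. apply Rmult_lt_0_compat; lra. }
  assert (Hnn : forall n t, (N <= n)%nat -> Cmod (psum c z (n + t) - psum c z n) <= e).
  { intros n t Hn. eapply Rle_trans. apply psum_tail; eauto. specialize (HN n Hn).
    apply Rle_trans with (B * (e * (1 - Cmod z) / (B + 1)) / (1 - Cmod z)).
    unfold Rdiv. apply Rmult_le_compat_r. apply Rlt_le, Rinv_0_lt_compat; lra. apply Rmult_le_compat_l; auto.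
    apply Rle_trans with ((B + 1) * (e * (1 - Cmod z) / (B + 1)) / (1 - Cmod z)).
    unfold Rdiv. apply Rmult_le_compat_r. apply Rlt_le, Rinv_0_lt_compat; lra. apply Rmult_le_compat_r. 
    apply Rlt_le, Rmult_lt_0_compat. apply Rmult_lt_0_compat; lra. apply Rinv_0_lt_compat; lra. lra.
    right. field. lra. }
  exists N. intros n m Hn Hm. destruct (le_lt_dec n m).
  - replace m with (n + (m - n))%nat by lia. rewrite Cmod_sub_sym. apply Hnn; auto.
  - replace n with (m + (n - m))%nat by lia. apply Hnn; auto.
Qed.

Lemma PS_tail c B z n : cbnd c B -> Cmod z < 1 -> Cmod (PS c z - psum c z n) <= B * Cmod z ^ n / (1 - Cmod z).
Proof.
  intros Hc Hz. apply cconv_dist with (psum c z). eapply PS_conv; eauto.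
  exists n. intros m Hm. replace m with (n + (m - n))%nat by lia. apply psum_tail; auto.
Qed.

Lemma PS_bound c B z : cbnd c B -> Cmod z < 1 -> Cmod (PS c z) <= B / (1 - Cmod z).
Proof.
  intros Hc Hz. pose proof (PS_tail c B z O Hc Hz). unfold psum in H. simpl in H.
  replace (PS c z - 0)%C with (PS c z) in H by ring. simpl in H. rewrite Rmult_1_r in H. auto.
Qed.

Definition Qd (p : C) (c : nat -> C) (j : nat) : C := PS (fun m => c (j + 1 + m)%nat) p.

Lemma Qd_bnd p c B : cbnd c B -> Cmod p < 1 -> cbnd (Qd p c) (B / (1 - Cmod p)).
Proof. intros Hc Hp j. unfold Qd. apply PS_bound; auto. intros k; apply Hc. Qed.

Definition Qf (p : C) (c : nat -> C) (K j : nat) : C := psum (fun m => c (j + 1 + m)%nat) p (K - 1 - j).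

Lemma geom_id (z p : C) K : ((z - p) * csum (fun j => Cpow p (K - 1 - j) * Cpow z j) K = Cpow z K - Cpow p K)%C.
Proof.
  induction K. simpl. ring.
  assert (csum (fun j => Cpow p (S K - 1 - j) * Cpow z j)%C (S K) = p * csum (fun j => Cpow p (K - 1 - j) * Cpow z j)%C K + Cpow z K)%C.
  { assert (E : csum (fun j => Cpow p (S K - 1 - j) * Cpow z j)%C K = (p * csum (fun j => Cpow p (K - 1 - j) * Cpow z j) K)%C).
    { rewrite <- csum_scal. apply csum_ext. intros j Hj. replace (S K - 1 - j)%nat with (S (K - 1 - j)) by lia. simpl. ring. }
    change (csum (fun j => Cpow p (S K - 1 - j) * Cpow z j)%C (S K)) with
      (csum (fun j => Cpow p (S K - 1 - j) * Cpow z j)%C K + Cpow p (S K - 1 - K) * Cpow z K)%C.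
    rewrite E. replace (S K - 1 - K)%nat with O by lia. simpl. ring. }
  rewrite H. simpl. replace ((z - p) * (p * csum (fun j => Cpow p (K - 1 - j) * Cpow z j) K + Cpow z K))%C
    with (p * ((z - p) * csum (fun j => Cpow p (K - 1 - j) * Cpow z j) K) + (z - p) * Cpow z K)%C by ring.
  rewrite IHK. ring.
Qed.

Lemma fin_div c (z p : C) K :
  (psum c z K - psum c p K = (z - p) * csum (fun j => Qf p c K j * Cpow z j) K)%C.
Proof.
  induction K. simpl. unfold psum; simpl. ring.
  assert (csum (fun j => Qf p c (S K) j * Cpow z j)%C (S K) =
          csum (fun j => Qf p c K j * Cpow z j)%C K + c K * csum (fun j => Cpow p (K - 1 - j) * Cpow z j)%C K)%C.
  { assert (E1 : Qf p c (S K) K = RtoC 0). { unfold Qf. replace (S K - 1 - K)%nat with O by lia. reflexivity. }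
    assert (E2 : forall j, (j < K)%nat -> Qf p c (S K) j = (Qf p c K j + c K * Cpow p (K - 1 - j))%C).
    { intros j Hj. unfold Qf. replace (S K - 1 - j)%nat with (S (K - 1 - j)) by lia.
      unfold psum. change (csum (fun k => c (j + 1 + k)%nat * Cpow p k)%C (S (K - 1 - j))) with
        (csum (fun k => c (j + 1 + k)%nat * Cpow p k)%C (K - 1 - j) + c (j + 1 + (K - 1 - j))%nat * Cpow p (K - 1 - j))%C.
      replace (j + 1 + (K - 1 - j))%nat with K by lia. reflexivity. }
    change (csum (fun j => Qf p c (S K) j * Cpow z j)%C (S K)) with
      (csum (fun j => Qf p c (S K) j * Cpow z j)%C K + Qf p c (S K) K * Cpow z K)%C.
    rewrite E1. rewrite <- csum_scal, <- csum_plus.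
    replace (RtoC 0 * Cpow z K)%C with (RtoC 0) by ring. rewrite Cplus_0_r.
    apply csum_ext. intros j Hj. rewrite E2 by auto. ring. }
  rewrite H. unfold psum in *. simpl csum.
  replace ((z - p) * (csum (fun j => Qf p c K j * Cpow z j) K + c K * csum (fun j => Cpow p (K - 1 - j) * Cpow z j) K))%C
    with ((z - p) * csum (fun j => Qf p c K j * Cpow z j) K + c K * ((z - p) * csum (fun j => Cpow p (K - 1 - j) * Cpow z j) K))%C by ring.
  rewrite <- IHK, geom_id. ring.
Qed.

Lemma pow_le_max (x y : R) a b : 0 <= x -> 0 <= y -> x ^ a * y ^ b <= Rmax x y ^ (a + b).
Proof.
  intros Hx Hy. rewrite pow_add. apply Rmult_le_compat; try (apply pow_le; auto);
  apply pow_incr; split; auto; [apply Rmax_l|apply Rmax_r].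
Qed.

Lemma PS_div c B z p : cbnd c B -> Cmod z < 1 -> Cmod p < 1 ->
  PS c z = (PS c p + (z - p) * PS (Qd p c) z)%C.
Proof.
  intros Hc Hz Hp.
  assert (HB : 0 <= B). { pose proof (Hc O). pose proof (Cmod_ge_0 (c O)). lra. }
  set (rho := Rmax (Cmod z) (Cmod p)).
  assert (Hrho : 0 <= rho < 1). { unfold rho. split. apply Rle_trans with (Cmod z). apply Cmod_ge_0. apply Rmax_l.
    apply Rmax_lub_lt; auto. }
  assert (Hclose : forall K, Cmod (psum (Qd p c) z K - csum (fun j => Qf p c K j * Cpow z j)%C K) <=
      B / (1 - Cmod p) * (INR K * rho ^ (K - 1))).
  { intros K. unfold psum. rewrite <- csum_minus. eapply Rle_trans. apply csum_Cmod.
    apply Rle_trans with (rsum (fun j => B / (1 - Cmod p) * rho ^ (K - 1)) K).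
    - apply rsum_le. intros j Hj.
      replace (Qd p c j * Cpow z j - Qf p c K j * Cpow z j)%C with ((Qd p c j - Qf p c K j) * Cpow z j)%C by ring.
      rewrite Cmod_mult, Cmod_pow. unfold Qd, Qf.
      pose proof (PS_tail (fun m => c (j + 1 + m)%nat) B p (K - 1 - j) ltac:(intro; apply Hc) Hp).
      pose proof (pow_le_max (Cmod p) (Cmod z) (K - 1 - j) j (Cmod_ge_0 _) (Cmod_ge_0 _)).
      replace (K - 1 - j + j)%nat with (K - 1)%nat in H0 by lia. rewrite Rmax_comm in H0. fold rho in H0.
      pose proof (pow_le (Cmod z) j (Cmod_ge_0 _)).
      apply Rle_trans with (B * Cmod p ^ (K - 1 - j) / (1 - Cmod p) * Cmod z ^ j). apply Rmult_le_compat_r; auto.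
      replace (B * Cmod p ^ (K - 1 - j) / (1 - Cmod p) * Cmod z ^ j) with (B / (1 - Cmod p) * (Cmod p ^ (K - 1 - j) * Cmod z ^ j)) by (field; lra).
      apply Rmult_le_compat_l; auto. apply Rdiv_le_0_compat; lra.
    - rewrite rsum_const. right; ring. }
  assert (Hc1 : cconv (fun K => csum (fun j => Qf p c K j * Cpow z j)%C K) (PS (Qd p c) z)).
  { intros e He. destruct (PS_conv (Qd p c) (B / (1 - Cmod p)) z (Qd_bnd p c B Hc Hp) Hz (e / 2) ltac:(lra)) as [N1 HN1].
    set (M := B / (1 - Cmod p)). assert (HM : 0 <= M) by (apply Rdiv_le_0_compat; lra).
    destruct (npow_lim0 rho Hrho (e / 4 / (M + 1))) as [N2 HN2]. apply Rdiv_lt_0_compat; lra.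
    destruct (pow_lim0 rho Hrho (e / 4 / (M + 1))) as [N3 HN3]. apply Rdiv_lt_0_compat; lra.
    exists (S (N1 + N2 + N3)). intros K HK.
    specialize (HN1 K ltac:(lia)). specialize (HN2 (K - 1)%nat ltac:(lia)). specialize (HN3 (K - 1)%nat ltac:(lia)).
    pose proof (Hclose K). fold M in H.
    assert (INR K * rho ^ (K - 1) <= e / 2 / (M + 1)).
    { replace (INR K) with (INR (K - 1) + 1). 2: { rewrite <- S_INR. f_equal. lia. }
      replace (e / 2 / (M + 1)) with (e / 4 / (M + 1) + e / 4 / (M + 1)) by (field; lra). lra. }
    assert (M * (INR K * rho ^ (K - 1)) <= e / 2).
    { apply Rle_trans with ((M + 1) * (e / 2 / (M + 1))). apply Rmult_le_compat; try lra.
      apply Rmult_le_pos. apply pos_INR. apply pow_le; lra. right; field; lra. }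
    pose proof (Cmod_tri3 (csum (fun j => Qf p c K j * Cpow z j)%C K) (psum (Qd p c) z K) (PS (Qd p c) z)).
    rewrite Cmod_sub_sym in H. lra. }
  assert (Hl : cconv (fun K => psum c z K - psum c p K)%C (PS c z - PS c p)%C).
  { unfold Cminus. apply cconv_plus. eapply PS_conv; eauto. 
    replace (- PS c p)%C with (- (1) * PS c p)%C by ring.
    apply cconv_ext with (fun n => - (1) * psum c p n)%C. intros; ring. apply cconv_scal. eapply PS_conv; eauto. }
  assert (Hr : cconv (fun K => psum c z K - psum c p K)%C ((z - p) * PS (Qd p c) z)%C).
  { apply cconv_ext with (fun K => (z - p) * csum (fun j => Qf p c K j * Cpow z j) K)%C.
    intros; rewrite fin_div; auto. apply cconv_scal. auto. }
  pose proof (cconv_unique _ _ _ Hl Hr). rewrite <- H. ring.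
Qed.

Definition ccont_on (D : C -> Prop) (f : C -> C) (w : C) :=
  forall e, 0 < e -> exists dl, 0 < dl /\ forall z, D z -> Cmod (z - w) < dl -> Cmod (f z - f w) <= e.

Lemma ccont_mult D f g w : ccont_on D f w -> ccont_on D g w -> ccont_on D (fun z => f z * g z)%C w.
Proof.
  intros Hf Hg e He.
  set (a := Cmod (f w)). set (b := Cmod (g w)).
  assert (Ha : 0 <= a) by apply Cmod_ge_0. assert (Hb : 0 <= b) by apply Cmod_ge_0.
  set (eta := Rmin 1 (e / (a + b + 1))).
  assert (Heta : 0 < eta) by (unfold eta; apply Rmin_pos; [lra|apply Rdiv_lt_0_compat; lra]).
  assert (Heta1 : eta <= 1) by apply Rmin_l.
  assert (Heta2 : eta * (a + b + 1) <= e).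
  { unfold eta. apply Rle_trans with (e / (a + b + 1) * (a + b + 1)). apply Rmult_le_compat_r. lra. apply Rmin_r. right; field; lra. }
  destruct (Hf eta Heta) as [d1 [Hd1 H1]]. destruct (Hg eta Heta) as [d2 [Hd2 H2]].
  exists (Rmin d1 d2). split. apply Rmin_pos; auto. intros z Dz Hz.
  specialize (H1 z Dz ltac:(eapply Rlt_le_trans; [exact Hz|apply Rmin_l])).
  specialize (H2 z Dz ltac:(eapply Rlt_le_trans; [exact Hz|apply Rmin_r])).
  replace (f z * g z - f w * g w)%C with ((f z - f w) * (g z - g w) + (f z - f w) * g w + f w * (g z - g w))%C by ring.
  eapply Rle_trans. apply Cmod_triangle. eapply Rle_trans. apply Rplus_le_compat_r. apply Cmod_triangle.
  rewrite !Cmod_mult. fold a b.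
  pose proof (Cmod_ge_0 (f z - f w)). pose proof (Cmod_ge_0 (g z - g w)).
  assert (Cmod (f z - f w) * Cmod (g z - g w) <= eta) by nra.
  assert (Cmod (f z - f w) * b <= eta * b) by nra. assert (a * Cmod (g z - g w) <= a * eta) by nra.
  nra.
Qed.

Lemma ccont_const D a w : ccont_on D (fun _ => a) w.
Proof. intros e He. exists 1. split. lra. intros. replace (a - a)%C with (RtoC 0) by ring. rewrite Cmod_0; lra. Qed.

Lemma ccont_inv D f w : f w <> RtoC 0 -> ccont_on D f w -> ccont_on D (fun z => / f z)%C w.
Proof.
  intros Hw Hf e He.
  set (a := Cmod (f w)). assert (Ha : 0 < a) by (apply Cmod_gt_0; auto).
  set (eta := Rmin (a / 2) (e * a * a / 2)).
  assert (Heta : 0 < eta). { unfold eta. apply Rmin_pos. lra. assert (0 < e * a * a) by (repeat apply Rmult_lt_0_compat; auto). lra. }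
  destruct (Hf eta Heta) as [d1 [Hd1 H1]]. exists d1. split; auto. intros z Dz Hz. specialize (H1 z Dz Hz).
  assert (Hfz : a / 2 <= Cmod (f z)).
  { pose proof (Cmod_rev_tri (f w) (f z)). rewrite Cmod_sub_sym in H. fold a in H.
    assert (eta <= a / 2) by apply Rmin_l. lra. }
  assert (f z <> RtoC 0). { intro H0. rewrite H0, Cmod_0 in Hfz. lra. }
  replace (/ f z - / f w)%C with ((f w - f z) * / (f z * f w))%C by (field; auto).
  rewrite Cmod_mult, Cmod_inv, Cmod_mult by (apply Cmult_neq_0; auto). fold a. rewrite Cmod_sub_sym.
  assert (Cmod (f z - f w) <= e * a * a / 2) by (eapply Rle_trans; [exact H1|apply Rmin_r]).
  assert (a * a / 2 <= Cmod (f z) * a) by nra.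
  apply Rle_trans with ((e * a * a / 2) * / (a * a / 2)).
  apply Rmult_le_compat. apply Cmod_ge_0. apply Rlt_le, Rinv_0_lt_compat. nra. auto.
  apply Rinv_le_contravar. nra. auto. right. field. lra.
Qed.

Lemma ccont_mono (D D' : C -> Prop) f w : (forall z, D' z -> D z) -> ccont_on D f w -> ccont_on D' f w.
Proof. intros H Hf e He. destruct (Hf e He) as [dl [Hdl H1]]. exists dl. split; auto. Qed.

Lemma disk_near p z : Cmod p < 1 -> Cmod (z - p) < (1 - Cmod p) / 2 -> Cmod z < 1 /\ (1 - Cmod p) / 2 < 1 - Cmod z.
Proof.
  intros Hp H. pose proof (Cmod_triangle (z - p) p). replace (z - p + p)%C with z in H0 by ring. lra.
Qed.

Lemma PS_cont c B p : cbnd c B -> Cmod p < 1 -> ccont_on (fun _ => True) (PS c) p.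
Proof.
  intros Hc Hp e He.
  set (M := B / (1 - Cmod p) * 2 / (1 - Cmod p)).
  assert (HB : 0 <= B). { pose proof (Hc O). pose proof (Cmod_ge_0 (c O)). lra. }
  assert (HM : 0 <= M) by (unfold M; apply Rdiv_le_0_compat; [apply Rmult_le_pos; [apply Rdiv_le_0_compat|]|]; lra).
  exists (Rmin ((1 - Cmod p) / 2) (e / (M + 1))). split. apply Rmin_pos. lra. apply Rdiv_lt_0_compat; lra.
  intros z _ Hz. assert (Hz1 : Cmod (z - p) < (1 - Cmod p) / 2) by (eapply Rlt_le_trans; [exact Hz|apply Rmin_l]).
  destruct (disk_near p z Hp Hz1) as [Hz2 Hz3].
  rewrite (PS_div c B z p Hc Hz2 Hp). replace (PS c p + (z - p) * PS (Qd p c) z - PS c p)%C with ((z - p) * PS (Qd p c) z)%C by ring.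
  rewrite Cmod_mult. pose proof (PS_bound (Qd p c) _ z (Qd_bnd p c B Hc Hp) Hz2).
  assert (Cmod (PS (Qd p c) z) <= M).
  { eapply Rle_trans. exact H. unfold M. unfold Rdiv at 1. unfold Rdiv at 2. rewrite Rmult_assoc. apply Rmult_le_compat_l.
    apply Rdiv_le_0_compat; lra. rewrite <- (Rinv_inv 2) at 1. rewrite <- Rinv_mult. apply Rinv_le_contravar. lra. lra. }
  assert (Cmod (z - p) <= e / (M + 1)) by (left; eapply Rlt_le_trans; [exact Hz|apply Rmin_r]).
  apply Rle_trans with (e / (M + 1) * M). apply Rmult_le_compat; auto; apply Cmod_ge_0.
  apply Rle_trans with (e / (M + 1) * (M + 1)). apply Rmult_le_compat_l. apply Rlt_le, Rdiv_lt_0_compat; lra. lra.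
  right; field; lra.
Qed.

Section Iter.
Variables (c : nat -> C) (B : R) (p : C).
Hypothesis Hc : cbnd c B.
Hypothesis Hp : Cmod p < 1.

Fixpoint cs (m : nat) : nat -> C := match m with O => c | S m => Qd p (cs m) end.
Fixpoint Bs (m : nat) : R := match m with O => B | S m => Bs m / (1 - Cmod p) end.

Lemma cs_bnd m : cbnd (cs m) (Bs m).
Proof. induction m; simpl; auto. apply Qd_bnd; auto. Qed.

Lemma Bs_eq m : Bs m * (1 - Cmod p) ^ m = B.
Proof. induction m; simpl. ring. rewrite <- IHm. field. lra. Qed.

Definition fm (m : nat) (z : C) : C := PS (cs m) z.

Lemma fm_div m z : Cmod z < 1 -> fm m z = (fm m p + (z - p) * fm (S m) z)%C.
Proof. intros Hz. unfold fm. simpl. apply (PS_div (cs m) (Bs m)); auto. apply cs_bnd. Qed.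

Lemma zero_prefix m : (forall j, (j < m)%nat -> fm j p = RtoC 0) ->
  forall z, Cmod z < 1 -> PS c z = (Cpow (z - p) m * fm m z)%C.
Proof.
  induction m; intros H z Hz. simpl. unfold fm. simpl. ring.
  rewrite IHm; auto. rewrite fm_div by auto. rewrite H by lia. simpl. ring.
Qed.

Lemma all_zero : (forall m, fm m p = RtoC 0) -> forall z, Cmod (z - p) < 1 - Cmod p -> PS c z = RtoC 0.
Proof.
  intros H z Hz.
  assert (Hz1 : Cmod z < 1). { pose proof (Cmod_triangle (z - p) p). replace (z - p + p)%C with z in H0 by ring. lra. }
  set (t := Cmod (z - p) / (1 - Cmod p)). assert (Ht : 0 <= t < 1).
  { unfold t. split. apply Rdiv_le_0_compat. apply Cmod_ge_0. lra. apply Rmult_lt_reg_r with (1 - Cmod p). lra.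
    unfold Rdiv. rewrite Rmult_assoc, Rinv_l by lra. lra. }
  assert (HB : 0 <= B). { pose proof (Hc O). pose proof (Cmod_ge_0 (c O)). lra. }
  apply Cmod_eq_0. apply Rle_antisym; [|apply Cmod_ge_0]. apply Rnot_lt_le. intro Hl.
  destruct (pow_lim0 t Ht (Cmod (PS c z) * (1 - Cmod z) / (B + 1))) as [N HN].
  { apply Rdiv_lt_0_compat; [|lra]. apply Rmult_lt_0_compat; lra. }
  specialize (HN N (le_n _)).
  set (X := Cmod (PS c z)) in *.
  assert (E : PS c z = (Cpow (z - p) N * fm N z)%C) by (apply zero_prefix; auto).
  pose proof (PS_bound (cs N) (Bs N) z (cs_bnd N) Hz1) as H0. fold (fm N z) in H0.
  assert (H1 : Cmod (z - p) ^ N * Bs N = t ^ N * B).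
  { rewrite <- (Bs_eq N). unfold t, Rdiv. rewrite Rpow_mult_distr, pow_inv. field. apply pow_nonzero. lra. }
  assert (H2 : 0 <= Cmod (z - p) ^ N) by (apply pow_le, Cmod_ge_0).
  assert (Hb : X <= t ^ N * B / (1 - Cmod z)).
  { unfold X. rewrite E, Cmod_mult, Cmod_pow. rewrite <- H1. unfold Rdiv. rewrite Rmult_assoc. apply Rmult_le_compat_l; auto. }
  assert (H3 : t ^ N * B / (1 - Cmod z) <= X * (1 - Cmod z) / (B + 1) * B / (1 - Cmod z)).
  { unfold Rdiv. apply Rmult_le_compat_r. apply Rlt_le, Rinv_0_lt_compat; lra. apply Rmult_le_compat_r; auto. }
  assert (H4 : X * (1 - Cmod z) / (B + 1) * B / (1 - Cmod z) = X * (B / (B + 1))) by (field; lra).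
  assert (H5 : B / (B + 1) < 1). { apply Rmult_lt_reg_r with (B + 1). lra. unfold Rdiv. rewrite Rmult_assoc, Rinv_l by lra. lra. }
  assert (H6 : 0 <= B / (B+1)) by (apply Rdiv_le_0_compat; lra).
  assert (X * (B / (B + 1)) < X) by nra.
  lra.
Qed.

Lemma nat_min (P : nat -> Prop) : (exists n, P n) -> exists n, P n /\ forall j, (j < n)%nat -> ~ P j.
Proof.
  intros [n Hn]. induction n using (well_founded_induction lt_wf).
  destruct (classic (exists j, (j < n)%nat /\ P j)) as [[j [Hj1 Hj2]]|Hno].
  - apply (H j Hj1 Hj2).
  - exists n. split; auto. intros j Hj HP. apply Hno. eauto.
Qed.

Lemma local_struct : (exists m, fm m p <> RtoC 0) ->
  exists m g, (forall z, Cmod z < 1 -> PS c z = (Cpow (z - p) m * g z)%C) /\ g p <> RtoC 0 /\ ccont_on (fun _ => True) g p.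
Proof.
  intros H. destruct (nat_min _ H) as [m [Hm Hmin]].
  exists m, (fm m). split; [|split]; auto.
  - apply zero_prefix. intros j Hj. apply NNPP. apply Hmin; auto.
  - unfold fm. apply (PS_cont (cs m) (Bs m)); auto. apply cs_bnd.
Qed.
End Iter.

Lemma Cpow_nz' (z : C) n : z <> RtoC 0 -> Cpow z n <> RtoC 0.
Proof.
  intros Hz H. apply Cmod_gt_0 in Hz. assert (Cmod (Cpow z n) = 0) by (rewrite H; apply Cmod_0).
  rewrite Cmod_pow in H0. pose proof (pow_lt (Cmod z) n Hz). lra.
Qed.

Lemma Cmult_integral' (a b : C) : (a * b)%C = RtoC 0 -> a = RtoC 0 \/ b = RtoC 0.
Proof.
  intros H. assert (Cmod a * Cmod b = 0) by (rewrite <- Cmod_mult, H; apply Cmod_0).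
  apply Rmult_integral in H0. destruct H0; [left|right]; apply Cmod_eq_0; auto.
Qed.

Lemma RtoC_minus' (a b : R) : RtoC (a - b) = (RtoC a - RtoC b)%C.
Proof. apply injective_projections; simpl; ring. Qed.

Lemma exists_dir (p : C) : exists zeta, Cmod zeta = 1 /\ p = (RtoC (Cmod p) * zeta)%C.
Proof.
  destruct (Ceq_dec p (RtoC 0)) as [H|H].
  - exists (RtoC 1). split. apply Cmod_1. rewrite H, Cmod_0. ring.
  - assert (Hm : 0 < Cmod p) by (apply Cmod_gt_0; auto).
    assert (RtoC (Cmod p) <> RtoC 0). { intro H0. apply RtoC_inj in H0. lra. }
    exists (p * / RtoC (Cmod p))%C. split.
    + rewrite Cmod_mult, Cmod_inv by auto. rewrite Cmod_R, Rabs_right by lra. field. lra.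
    + field. auto.
Qed.

Section MeroA.
Variables (c : nat -> C) (B : R) (A : C -> C).
Hypothesis Hc : cbnd c B.
Hypothesis HAs : forall z, Cmod z < 1 -> cconv (psum c z) (A z).
Hypothesis HAc : forall zeta, Cmod zeta = 1 -> ccont_on (fun w => Cmod w <= 1) A zeta.
Hypothesis HAnz : forall zeta, Cmod zeta = 1 -> A zeta <> RtoC 0.

Lemma A_PS z : Cmod z < 1 -> A z = PS c z.
Proof. intros Hz. apply (cconv_unique (psum c z)); auto. eapply PS_conv; eauto. Qed.

Lemma not_all_zero p : Cmod p < 1 -> exists m, fm c p m p <> RtoC 0.
Proof.
  intros Hp. apply NNPP. intro Hno.
  assert (Hz : forall m, fm c p m p = RtoC 0). { intros m. apply NNPP. intro H. apply Hno. eauto. }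
  pose proof (all_zero c B p Hc Hp Hz) as H0.
  destruct (exists_dir p) as [zeta [Hz1 Hz2]].
  pose proof (HAnz zeta Hz1) as Hnz. apply Cmod_gt_0 in Hnz.
  destruct (HAc zeta Hz1 (Cmod (A zeta) / 2) ltac:(lra)) as [dl [Hdl Hd]].
  set (s := Rmax (Cmod p) (1 - dl / 2)).
  assert (Hs : Cmod p <= s < 1). { unfold s. split. apply Rmax_l. apply Rmax_lub_lt; lra. }
  assert (Hs2 : 1 - dl / 2 <= s) by apply Rmax_r.
  set (w := (RtoC s * zeta)%C).
  assert (Hw : Cmod w = s). { unfold w. rewrite Cmod_mult, Hz1, Cmod_R, Rabs_right. ring. pose proof (Cmod_ge_0 p). lra. }
  assert (Hwp : Cmod (w - p) = s - Cmod p).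
  { assert (E : (w - p)%C = (RtoC (s - Cmod p) * zeta)%C).
    { unfold w. rewrite RtoC_minus'. set (r := Cmod p) in *. rewrite Hz2 at 1. ring. }
    rewrite E, Cmod_mult, Hz1, Cmod_R, Rabs_right; lra. }
  assert (Hwz : Cmod (w - zeta) = 1 - s).
  { unfold w. replace (RtoC s * zeta - zeta)%C with (RtoC (- (1 - s)) * zeta)%C
      by (replace (RtoC (- (1 - s))) with (RtoC s - 1)%C by (apply injective_projections; simpl; ring); ring). rewrite Cmod_mult, Hz1, Cmod_R, Rabs_left1; lra. }
  assert (A w = RtoC 0). { rewrite A_PS by lra. apply H0. lra. }
  specialize (Hd w ltac:(lra) ltac:(lra)). rewrite H, Cmod_sub_sym in Hd.
  replace (A zeta - 0)%C with (A zeta) in Hd by ring. lra.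
Qed.

Lemma local_A p : Cmod p < 1 -> exists m g dl, 0 < dl /\ g p <> RtoC 0 /\
  (forall z, Cmod (z - p) < dl -> Cmod z < 1 /\ A z = (Cpow (z - p) m * g z)%C /\ Cmod (g p) / 2 <= Cmod (g z)).
Proof.
  intros Hp. destruct (local_struct c B p Hc Hp (not_all_zero p Hp)) as [m [g [H1 [H2 H3]]]].
  exists m, g. assert (Hg : 0 < Cmod (g p)) by (apply Cmod_gt_0; auto).
  destruct (H3 (Cmod (g p) / 2) ltac:(lra)) as [dl [Hdl Hd]].
  exists (Rmin dl ((1 - Cmod p) / 2)). split. apply Rmin_pos; lra. split; auto.
  intros z Hz. assert (Hz1 : Cmod (z - p) < (1 - Cmod p) / 2) by (eapply Rlt_le_trans; [exact Hz|apply Rmin_r]).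
  destruct (disk_near p z Hp Hz1) as [Hz2 _]. split; auto. split. rewrite A_PS; auto.
  specialize (Hd z I ltac:(eapply Rlt_le_trans; [exact Hz|apply Rmin_l])).
  pose proof (Cmod_rev_tri (g p) (g z)). rewrite Cmod_sub_sym in H. lra.
Qed.

Lemma A_cont_in w : Cmod w < 1 -> ccont_on (fun _ => True) A w.
Proof.
  intros Hw e He. destruct (PS_cont c B w Hc Hw e He) as [dl [Hdl Hd]].
  exists (Rmin dl ((1 - Cmod w) / 2)). split. apply Rmin_pos; lra.
  intros z _ Hz. assert (Hz1 : Cmod (z - w) < (1 - Cmod w) / 2) by (eapply Rlt_le_trans; [exact Hz|apply Rmin_r]).
  destruct (disk_near w z Hw Hz1) as [Hz2 _]. rewrite !A_PS by auto. apply Hd; auto.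
  eapply Rlt_le_trans; [exact Hz|apply Rmin_l].
Qed.

Theorem mero_interior : meromorphic_extension (fun z => Cmod z < 1) (fun z => / A z)%C.
Proof.
  exists (fun z => / A z)%C, (fun z => Cmod z < 1 /\ A z = RtoC 0). split; [split; [|split; [|split]]|].
  - intros p [Hp _]; auto.
  - intros w Hw. destruct (local_A w Hw) as [m [g [dl [Hdl [Hg Hloc]]]]].
    exists dl. split; auto. intros p [Hp HAp] Hpw. apply Rnot_lt_le. intro Hlt.
    destruct (Hloc p Hlt) as [_ [E Hgp]]. rewrite E in HAp.
    apply Cmult_integral' in HAp. destruct HAp as [H|H].
    + apply (Cpow_nz' (p - w) m); auto. intro H0. apply Hpw. replace p with ((p - w) + w)%C by ring. rewrite H0. ring.
    + rewrite H, Cmod_0 in Hgp. apply Cmod_gt_0 in Hg. lra.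
  - intros w Hw Hnp. assert (HAw : A w <> RtoC 0) by (intro H; apply Hnp; auto).
    set (h := PS (Qd w c)).
    assert (Hdiv : forall z, Cmod z < 1 -> A z = (A w + (z - w) * h z)%C).
    { intros z Hz. rewrite !A_PS by auto. apply (PS_div c B); auto. }
    assert (Hcont : ccont_on (fun _ => True) A w) by (apply A_cont_in; auto).
    assert (Hnz : exists r, 0 < r /\ forall z, Cmod (z - w) < r -> Cmod z < 1 /\ A z <> RtoC 0).
    { assert (Ha : 0 < Cmod (A w)) by (apply Cmod_gt_0; auto).
      destruct (Hcont (Cmod (A w) / 2) ltac:(lra)) as [dl [Hdl Hd]].
      exists (Rmin dl ((1 - Cmod w) / 2)). split. apply Rmin_pos; lra. intros z Hz.
      assert (Hz1 : Cmod (z - w) < (1 - Cmod w) / 2) by (eapply Rlt_le_trans; [exact Hz|apply Rmin_r]).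
      destruct (disk_near w z Hw Hz1) as [Hz2 _]. split; auto. intro H0.
      specialize (Hd z I ltac:(eapply Rlt_le_trans; [exact Hz|apply Rmin_l])). rewrite H0 in Hd.
      replace (0 - A w)%C with (- A w)%C in Hd by ring. rewrite Cmod_opp in Hd. lra. }
    destruct Hnz as [r [Hr Hnz]].
    apply (deriv_lemma _ (fun z => - h z * / (A z * A w))%C w r Hr).
    + intros z Hz. destruct (Hnz z Hz) as [Hz1 Hz2].
      assert (E : ((z - w) * h z)%C = (A z - A w)%C) by (rewrite (Hdiv z Hz1); ring).
      replace ((z - w) * (- h z * / (A z * A w)))%C with (- ((z - w) * h z) * / (A z * A w))%C by ring.
      rewrite E. field. split; auto.
    + intros e He.
      assert (Hhc : ccont_on (fun _ => True) (fun z => - h z)%C w).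
      { apply ccont_mono with (fun _ => True); auto.
        replace (fun z => - h z)%C with (fun z => (- (1)) * h z)%C by (apply FunctionalExtensionality.functional_extensionality; intros; ring).
        apply ccont_mult. apply ccont_const. unfold h. apply (PS_cont (Qd w c) (B / (1 - Cmod w))); auto. apply Qd_bnd; auto. }
      assert (Hvc : ccont_on (fun _ => True) (fun z => / (A z * A w))%C w).
      { apply ccont_inv. apply Cmult_neq_0; auto. apply ccont_mult; auto. apply ccont_const. }
      pose proof (ccont_mult _ _ _ w Hhc Hvc e He) as HH. destruct HH as [dl [Hdl Hd]].
      exists dl. split; auto.
  - intros p [Hp HAp]. destruct (local_A p Hp) as [m [g [dl [Hdl [Hg Hloc]]]]].
    assert (Hg0 : 0 < Cmod (g p)) by (apply Cmod_gt_0; auto).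
    exists m, dl, (2 / Cmod (g p)). split; auto. intros w [Hw1 Hw2].
    destruct (Hloc w Hw2) as [_ [E Hgw]].
    assert (Hwp : (w - p)%C <> RtoC 0). { intro H. rewrite H, Cmod_0 in Hw1. lra. }
    assert (Hpw : Cpow (w - p) m <> RtoC 0) by (apply Cpow_nz'; auto).
    assert (Hgw0 : g w <> RtoC 0). { intro H. rewrite H, Cmod_0 in Hgw. lra. }
    rewrite E. replace (Cpow (w - p) m * / (Cpow (w - p) m * g w))%C with (/ g w)%C by (field; auto).
    rewrite Cmod_inv by auto. apply Rle_trans with (/ (Cmod (g p) / 2)). apply Rinv_le_contravar; lra.
    right. field. lra.
  - intros zeta Hz e He.
    assert (Hnz : A zeta <> RtoC 0) by auto.
    pose proof (ccont_inv _ A zeta Hnz (HAc zeta Hz)) as Hi.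
    destruct (Hi e He) as [dl [Hdl Hd]]. exists dl. split; auto. intros w Hw _ Hwz. apply Hd; auto. lra.
Qed.
End MeroA.

Open Scope R_scope.

Lemma deriv_expand (F : C -> C) (u : C) : @ex_derive C_AbsRing C_NormedModule F u ->
  exists l, forall e, 0 < e -> exists dl, 0 < dl /\ forall y, Cmod (y - u) < dl ->
     Cmod (F y - F u - (y - u) * l) <= e * Cmod (y - u).
Proof.
  intros [l [_ Hl]]. exists l. intros e He.
  specialize (Hl u (fun P H => H) (mkposreal e He)). destruct Hl as [dl Hdl].
  exists dl. split. apply cond_pos. intros y Hy. apply Hdl.
  apply (@norm_compat1 C_AbsRing (AbsRing_NormedModule C_AbsRing)). exact Hy.
Qed.

Lemma Cinv_neq (a b : C) : a <> RtoC 0 -> b <> RtoC 0 -> a <> b -> (/ a)%C <> (/ b)%C.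
Proof. intros Ha Hb H E. apply H. apply Cinv_inj; auto. Qed.

Lemma Cmod_inv_diff (a b : C) : a <> RtoC 0 -> b <> RtoC 0 -> Cmod (/ a - / b) = Cmod (a - b) / (Cmod a * Cmod b).
Proof.
  intros Ha Hb. replace (/ a - / b)%C with ((b - a) * / (a * b))%C by (field; auto).
  rewrite Cmod_mult, Cmod_inv, Cmod_mult by (apply Cmult_neq_0; auto). rewrite Cmod_sub_sym. reflexivity.
Qed.

Lemma nz_of_mod (a : C) r : 0 < r -> r < Cmod a -> a <> RtoC 0.
Proof. intros Hr H E. rewrite E, Cmod_0 in H. lra. Qed.

Lemma Cpow_mul_l' (a b : C) m : Cpow (a * b) m = (Cpow a m * Cpow b m)%C.
Proof. induction m; simpl. ring. rewrite IHm. ring. Qed.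

Lemma mero_ext U T1 T2 : meromorphic_extension U T1 -> (forall z, on_circle z -> T1 z = T2 z) -> meromorphic_extension U T2.
Proof.
  intros [F [P [HM HB]]] H. exists F, P. split; auto. intros zeta Hz. rewrite <- H; auto.
Qed.

Lemma inv_circle z : on_circle z -> on_circle (/ z)%C.
Proof.
  unfold on_circle. intros H. assert (z <> RtoC 0) by (apply (nz_of_mod z (1/2)); lra).
  rewrite Cmod_inv by auto. rewrite H. apply Rinv_1.
Qed.

Theorem mero_invert T : meromorphic_extension (fun z => Cmod z < 1) T ->
  meromorphic_extension (fun z => 1 < Cmod z) (fun z => T (/ z)%C).
Proof.
  intros [F [P [[HP1 [HP2 [HP3 HP4]]] HB]]].
  exists (fun z => F (/ z)%C), (fun z => 1 < Cmod z /\ P (/ z)%C). split; [split; [|split; [|split]]|].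
  - intros p [H _]; auto.
  - intros w Hw. assert (Hw0 : w <> RtoC 0) by (apply (nz_of_mod w 1); lra).
    assert (Hu : Cmod (/ w) < 1). { rewrite Cmod_inv by auto. rewrite <- Rinv_1. apply Rinv_lt_contravar; lra. }
    destruct (HP2 (/ w)%C Hu) as [d [Hd Hd2]].
    exists (d * Cmod w). split. nra. intros p [Hp1 Hp2] Hpw.
    assert (Hp0 : p <> RtoC 0) by (apply (nz_of_mod p 1); lra).
    specialize (Hd2 (/ p)%C Hp2 (Cinv_neq p w Hp0 Hw0 Hpw)).
    rewrite Cmod_inv_diff in Hd2 by auto.
    assert (0 < Cmod p * Cmod w) by nra.
    apply Rmult_le_compat_r with (r := Cmod p * Cmod w) in Hd2; [|lra].
    unfold Rdiv in Hd2. rewrite Rmult_assoc, Rinv_l, Rmult_1_r in Hd2 by lra.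
    assert (0 <= d * Cmod w * (Cmod p - 1)) by (apply Rmult_le_pos; nra). nra.
  - intros w Hw Hnp. assert (Hw0 : w <> RtoC 0) by (apply (nz_of_mod w 1); lra).
    assert (Hu : Cmod (/ w) < 1). { rewrite Cmod_inv by auto. rewrite <- Rinv_1. apply Rinv_lt_contravar; lra. }
    assert (HnP : ~ P (/ w)%C) by (intro H; apply Hnp; auto).
    destruct (deriv_expand F (/ w)%C (HP3 _ Hu HnP)) as [l Hl].
    set (u := (/ w)%C).
    set (Hq := fun y => if Ceq_dec y u then l else ((F y - F u) / (y - u))%C).
    assert (HHq : forall y, F y = (F u + (y - u) * Hq y)%C).
    { intros y. unfold Hq. destruct (Ceq_dec y u). subst. ring. field. intro H. apply n. 
      replace y with ((y - u) + u)%C by ring. rewrite H; ring. }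
    assert (HqC : ccont_on (fun _ => True) Hq u).
    { intros e He. destruct (Hl e He) as [dl [Hdl Hd]]. exists dl. split; auto. intros y _ Hy.
      unfold Hq at 2. destruct (Ceq_dec u u); [|tauto]. unfold Hq. destruct (Ceq_dec y u).
      replace (l - l)%C with (RtoC 0) by ring. rewrite Cmod_0. lra.
      assert (Hyu : (y - u)%C <> RtoC 0). { intro H. apply n. replace y with ((y - u) + u)%C by ring. rewrite H; ring. }
      replace ((F y - F u) / (y - u) - l)%C with ((F y - F u - (y - u) * l) / (y - u))%C by (field; auto).
      rewrite Cmod_div by auto. specialize (Hd y Hy). apply Cmod_gt_0 in Hyu.
      apply Rmult_le_reg_r with (Cmod (y - u)); auto. unfold Rdiv. rewrite Rmult_assoc, Rinv_l by lra.
      fold u in Hd. lra. }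
    assert (Hinv : forall e, 0 < e -> exists dl, 0 < dl /\ dl <= Cmod w / 2 /\ forall z, Cmod (z - w) < dl -> Cmod (/ z - u) < e).
    { intros e He. exists (Rmin (Cmod w / 2) (e * (Cmod w * Cmod w) / 2)). split. apply Rmin_pos. lra.
      assert (0 < Cmod w * Cmod w) by nra. apply Rdiv_lt_0_compat; [nra|lra]. split. apply Rmin_l.
      intros z Hz. assert (Hz1 : Cmod (z - w) < Cmod w / 2) by (eapply Rlt_le_trans; [exact Hz|apply Rmin_l]).
      assert (Hz2 : Cmod z >= Cmod w / 2). { pose proof (Cmod_rev_tri w z). rewrite Cmod_sub_sym in H. lra. }
      assert (Hz0 : z <> RtoC 0) by (apply (nz_of_mod z (Cmod w / 4)); lra).
      unfold u. rewrite Cmod_inv_diff by auto.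
      assert (Hz3 : Cmod (z - w) < e * (Cmod w * Cmod w) / 2) by (eapply Rlt_le_trans; [exact Hz|apply Rmin_r]).
      apply Rmult_lt_reg_r with (Cmod z * Cmod w). nra. unfold Rdiv. rewrite Rmult_assoc, Rinv_l, Rmult_1_r by nra.
      assert (Cmod w * Cmod w / 2 <= Cmod z * Cmod w) by nra. nra. }
    destruct (Hinv (1 : R) ltac:(lra)) as [r [Hr [Hr2 _]]].
    apply (deriv_lemma _ (fun z => Hq (/ z)%C * (- / (z * w)))%C w r Hr).
    + intros z Hz. assert (Hz2 : Cmod z >= Cmod w / 2). { pose proof (Cmod_rev_tri w z). rewrite Cmod_sub_sym in H. lra. }
      assert (Hz0 : z <> RtoC 0) by (apply (nz_of_mod z (Cmod w / 4)); lra).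
      rewrite (HHq (/ z)%C). fold u. replace (/ z - u)%C with ((z - w) * (- / (z * w)))%C by (unfold u; field; auto). ring.
    + assert (Hcomp : ccont_on (fun _ => True) (fun z => Hq (/ z)%C) w).
      { intros e He. destruct (HqC e He) as [d1 [Hd1 Hd]]. destruct (Hinv d1 Hd1) as [d2 [Hd2 [_ Hd3]]].
        exists d2. split; [auto|]. intros z _ Hz. fold u. apply Hd; auto. }
      assert (Hc2 : ccont_on (fun _ => True) (fun z => - / (z * w))%C w).
      { replace (fun z => - / (z * w))%C with (fun z => (- (1)) * / (z * w))%C by (apply FunctionalExtensionality.functional_extensionality; intros; ring).
        apply ccont_mult. apply ccont_const. apply ccont_inv. apply Cmult_neq_0; auto.
        replace (fun z => z * w)%C with (fun z => (fun z => z) z * (fun _ => w) z)%C by reflexivity.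
        apply ccont_mult. intros e He. exists e. split; auto. intros; lra. apply ccont_const. }
      intros e He. destruct (ccont_mult _ _ _ w Hcomp Hc2 e He) as [dl [Hdl Hd]]. exists dl. split; auto.
  - intros p [Hp1 Hp2]. assert (Hp0 : p <> RtoC 0) by (apply (nz_of_mod p 1); lra).
    destruct (HP4 _ Hp2) as [m [d [M [Hd HM]]]].
    set (a := Cmod p). assert (Ha : 1 < a) by auto.
    exists m, (Rmin (a / 2) (d * (a * a) / 2)), ((2 * a * a) ^ m * M).
    split. apply Rmin_pos. lra. apply Rdiv_lt_0_compat; [|lra]. apply Rmult_lt_0_compat; nra.
    intros z [Hz1 Hz2].
    assert (Hz3 : Cmod (z - p) < a / 2) by (eapply Rlt_le_trans; [exact Hz2|apply Rmin_l]).
    assert (Hz4 : Cmod (z - p) < d * (a * a) / 2) by (eapply Rlt_le_trans; [exact Hz2|apply Rmin_r]).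
    assert (Hz5 : a / 2 <= Cmod z). { pose proof (Cmod_rev_tri p z). rewrite Cmod_sub_sym in H. fold a in H. lra. }
    assert (Hz6 : Cmod z <= 2 * a). { pose proof (Cmod_triangle (z - p) p). replace (z - p + p)%C with z in H by ring. fold a in H. lra. }
    assert (Hz0 : z <> RtoC 0) by (apply (nz_of_mod z (a / 4)); lra).
    assert (Hzp : z <> p). { intro H. subst. replace (p - p)%C with (RtoC 0) in Hz1 by ring. rewrite Cmod_0 in Hz1. lra. }
    assert (Hy : 0 < Cmod (/ z - / p) < d).
    { rewrite Cmod_inv_diff by auto. fold a. split.
      apply Rdiv_lt_0_compat; [auto|nra].
      apply Rmult_lt_reg_r with (Cmod z * a). nra. unfold Rdiv. rewrite Rmult_assoc, Rinv_l, Rmult_1_r by nra. nra. }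
    specialize (HM _ Hy).
    replace (z - p)%C with ((/ z - / p) * (- (z * p)))%C by (field; auto).
    rewrite Cpow_mul_l', Cmod_mult, Cmod_mult. rewrite Cmod_mult in HM.
    rewrite (Cmod_pow (- (z * p))). rewrite Cmod_opp, Cmod_mult. fold a.
    pose proof (Cmod_ge_0 (Cpow (/ z - / p) m)). pose proof (Cmod_ge_0 (F (/ z)%C)).
    assert (Hzm : (Cmod z * a) ^ m <= (2 * a * a) ^ m). { apply pow_incr. split. nra. nra. }
    assert (0 <= (Cmod z * a) ^ m) by (apply pow_le; nra).
    assert (HM0 : 0 <= M). { eapply Rle_trans; [|exact HM]. apply Rmult_le_pos; auto. }
    replace (Cmod (Cpow (/ z - / p) m) * (Cmod z * a) ^ m * Cmod (F (/ z)%C)) with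
      ((Cmod z * a) ^ m * (Cmod (Cpow (/ z - / p) m) * Cmod (F (/ z)%C))) by ring.
    apply Rle_trans with ((Cmod z * a) ^ m * M). apply Rmult_le_compat_l; auto.
    apply Rmult_le_compat_r; auto.
  - intros zeta Hz e He. destruct (HB (/ zeta)%C (inv_circle zeta Hz) e He) as [d [Hd Hd2]].
    exists d. split; auto. intros w Hw Hnp Hwz.
    assert (Hw0 : w <> RtoC 0) by (apply (nz_of_mod w 1); lra).
    assert (Hz0 : zeta <> RtoC 0). { unfold on_circle in Hz. apply (nz_of_mod zeta (1/2)); lra. }
    apply Hd2. rewrite Cmod_inv by auto. rewrite <- Rinv_1. apply Rinv_lt_contravar; lra.
    intro H. apply Hnp. auto.
    rewrite Cmod_inv_diff by auto. unfold on_circle in Hz. rewrite Hz, Rmult_1_r.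
    apply Rle_lt_trans with (Cmod (w - zeta)); auto. unfold Rdiv. rewrite <- (Rmult_1_r (Cmod (w - zeta))) at 2.
    apply Rmult_le_compat_l. apply Cmod_ge_0. rewrite <- Rinv_1. apply Rinv_le_contravar; lra.
Qed.

Open Scope R_scope.

Definition Wt (n : Z) : R := (1 + IZR (Z.abs n)) * (2 + IZR (Z.abs n)).

Lemma Wt_ge2 n : 2 <= Wt n.
Proof. unfold Wt. pose proof (IZR_abs_nonneg n). nra. Qed.

Lemma finite_max (f : Z -> R) (N : nat) : exists M, forall n, (Z.abs n <= Z.of_nat N)%Z -> f n <= M.
Proof.
  induction N. exists (f 0%Z). intros n Hn. assert (n = 0%Z) by lia. subst; lra.
  destruct IHN as [M HM]. exists (Rmax M (Rmax (f (Z.of_nat (S N))) (f (- Z.of_nat (S N))%Z))).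
  intros n Hn. destruct (Z_le_dec (Z.abs n) (Z.of_nat N)).
  - eapply Rle_trans. apply HM; auto. apply Rmax_l.
  - assert (n = Z.of_nat (S N) \/ n = (- Z.of_nat (S N))%Z) by lia. destruct H; subst.
    + eapply Rle_trans; [|apply Rmax_r]. apply Rmax_l.
    + eapply Rle_trans; [|apply Rmax_r]. apply Rmax_r.
Qed.

Lemma decay_bound q : rapid_decay q -> exists C, 0 <= C /\ forall n, Cmod (q n) * Wt n <= C.
Proof.
  intros hq. destruct (hq 2%nat) as [Hp Hm].
  destruct (Hp 1 ltac:(lra)) as [N1 HN1]. destruct (Hm 1 ltac:(lra)) as [N2 HN2].
  destruct (finite_max (fun n => Cmod (q n) * Wt n) (Z.to_nat (Z.abs N1 + Z.abs N2))) as [M HM].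
  exists (Rmax 6 M). split. apply Rle_trans with 6. lra. apply Rmax_l.
  intros n. destruct (Z_le_dec (Z.abs n) (Z.of_nat (Z.to_nat (Z.abs N1 + Z.abs N2)))).
  - eapply Rle_trans. apply HM; auto. apply Rmax_r.
  - assert (Hb : Cmod (RtoC (IZR (Z.abs n) ^ 2) * q n) <= 1).
    { destruct (Z_le_dec 0 n). apply HN1. lia. apply HN2. lia. }
    rewrite Cmod_mult, Cmod_R, Rabs_right in Hb by (apply Rle_ge, pow_le, IZR_abs_nonneg).
    set (a := IZR (Z.abs n)) in *.
    assert (Ha : 1 <= a). { unfold a. replace 1 with (IZR 1) by reflexivity. apply IZR_le. lia. }
    assert (Wt n <= 6 * a ^ 2). { unfold Wt. fold a. simpl. nra. }
    apply Rle_trans with 6; [|apply Rmax_l].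
    pose proof (Cmod_ge_0 (q n)).
    apply Rle_trans with (Cmod (q n) * (6 * a ^ 2)). apply Rmult_le_compat_l; auto. nra.
Qed.

Section Final.
Variables (a1 a2 a3 a4 b1 b2 b3 b4 : Z -> C) (Cst : R).
Hypothesis Cst_pos : 0 <= Cst.
Hypothesis eps_bound : forall n, eps a1 a2 a3 a4 b1 b2 b3 b4 n <= Gf Cst n.

Lemma sys_mero (V : C -> C) : (forall y, Cmod y = 1 -> Acl a1 a2 a3 a4 b1 b2 b3 b4 y = V y) ->
  (forall y, Cmod y = 1 -> V y <> RtoC 0) ->
  meromorphic_extension (fun y => Cmod y < 1) (fun y => / V y)%C.
Proof.
  intros HV HVnz. apply mero_ext with (fun y => / Acl a1 a2 a3 a4 b1 b2 b3 b4 y)%C.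
  - apply (mero_interior (ccoef a1 a2 a3 a4 b1 b2 b3 b4) (Kc Cst)).
    + intros k. apply (ccoef_bound _ _ _ _ _ _ _ _ Cst Cst_pos eps_bound).
    + intros z Hz. apply (Acl_series _ _ _ _ _ _ _ _ Cst Cst_pos eps_bound z Hz).
    + intros zeta Hz e He. apply (Acl_cont _ _ _ _ _ _ _ _ Cst Cst_pos eps_bound zeta ltac:(lra) e He).
    + intros zeta Hz. rewrite HV; auto.
  - intros z Hz. unfold on_circle in Hz. rewrite HV; auto.
Qed.
End Final.

Lemma eps_gen (q r : Z -> C) Cq Cr : (forall n, Cmod (q n) * Wt n <= Cq) -> (forall n, Cmod (r n) * Wt n <= Cr) ->
  forall n, 2 * Cmod (q n) + Cmod (r n) + 2 * (Cmod (q n) * Cmod (r n)) <= Gf (2 * Cq + Cr + 2 * Cq * Cr) n.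
Proof.
  intros Hq Hr n. unfold Gf. fold (Wt n). pose proof (Wt_ge2 n).
  specialize (Hq n). specialize (Hr n). pose proof (Cmod_ge_0 (q n)). pose proof (Cmod_ge_0 (r n)).
  apply Rmult_le_reg_r with (Wt n). lra. unfold Rdiv. rewrite Rmult_assoc, Rinv_l, Rmult_1_r by lra.
  assert (Cmod (r n) <= Cr) by nra.
  assert (Cmod (q n) * Cmod (r n) * Wt n <= Cq * Cr).
  { replace (Cmod (q n) * Cmod (r n) * Wt n) with (Cmod (q n) * Wt n * Cmod (r n)) by ring.
    apply Rmult_le_compat; try nra. }
  nra.
Qed.

Definition z0 : Z -> C := fun _ => RtoC 0.

Lemma Cmod_00 : Cmod (RtoC 0) = 0.
Proof. apply Cmod_0. Qed.

Lemma vanish_comb (u v : Z -> C) : vanish_pinf u -> vanish_pinf v ->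
  forall e, 0 < e -> exists N, forall n, (N <= n)%Z -> Cmod (u n) + Cmod (v n) <= e.
Proof.
  intros Hu Hv e He. destruct (Hu (e/2) ltac:(lra)) as [N1 H1]. destruct (Hv (e/2) ltac:(lra)) as [N2 H2].
  exists (Z.max N1 N2). intros n Hn. specialize (H1 n ltac:(lia)). specialize (H2 n ltac:(lia)). lra.
Qed.

Lemma vanish_mul_p (u : Z -> C) (w : Z -> C) : (forall n, Cmod (w n) = 1) -> vanish_pinf u -> vanish_pinf (fun n => w n * u n)%C.
Proof. intros Hw Hu e He. destruct (Hu e He) as [N HN]. exists N. intros n Hn. rewrite Cmod_mult, Hw, Rmult_1_l. auto. Qed.
Lemma vanish_mul_m (u : Z -> C) (w : Z -> C) : (forall n, Cmod (w n) = 1) -> vanish_minf u -> vanish_minf (fun n => w n * u n)%C.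
Proof. intros Hw Hu e He. destruct (Hu e He) as [N HN]. exists N. intros n Hn. rewrite Cmod_mult, Hw, Rmult_1_l. auto. Qed.
Lemma vanish_ext_p (u v : Z -> C) : (forall n, u n = v n) -> vanish_pinf u -> vanish_pinf v.
Proof. intros H Hu e He. destruct (Hu e He) as [N HN]. exists N. intros n Hn. rewrite <- H. auto. Qed.
Lemma vanish_ext_m (u v : Z -> C) : (forall n, u n = v n) -> vanish_minf u -> vanish_minf v.
Proof. intros H Hu e He. destruct (Hu e He) as [N HN]. exists N. intros n Hn. rewrite <- H. auto. Qed.

Section Ident.
Variables q r : Z -> C.

Definition s1a2 n := (- q n)%C.
Definition s1a4 n := (- (q n * r n))%C.
Definition s1b4 n := (q n * r n)%C.
Definition Acl1 := Acl z0 s1a2 z0 s1a4 z0 q r s1b4.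

Definition s2a1 n := (q n * r n)%C.
Definition s2b1 n := (- (q n * r n))%C.
Definition s2b3 n := (- q n)%C.
Definition Acl2 := Acl s2a1 r q z0 s2b1 z0 s2b3 z0.

Lemma ident1 z Tl L Tr R Tbl Lb Tbr Rb : on_circle z -> scattering_coeffs q r z Tl L Tr R Tbl Lb Tbr Rb ->
  Cmod z <= 1 ->
  (forall Cst, 0 <= Cst -> (forall n, eps z0 s1a2 z0 s1a4 z0 q r s1b4 n <= Gf Cst n) -> Acl1 z = (/ Tl)%C).
Proof.
  intros Hz (HTl & HTr & HTbl & HTbr & psi & phi & psib & phib & Spsi & Sphi & Spsib & Sphib &
     Ppsi & Mphi & Ppsib & Mphib & Mpsi & Pphi & Mpsib & Pphib) Hz1 Cst HC HE.
  unfold on_circle in Hz. assert (Hz0 : z <> RtoC 0) by (apply (nz_of_mod z (1/2)); lra).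
  set (x := fun n => (Cpowz z (- n) * fst (psi n), Cpowz z (- n) * snd (psi n))%C).
  apply (Acl_jost _ _ _ _ _ _ _ _ Cst HC HE z x); auto.
  - intros n. unfold x, Lfun, z0, s1a2, s1a4, s1b4; simpl. destruct (Spsi n) as [E1 E2].
    assert (Ep : Cpowz z (- n) = (z * Cpowz z (- (n + 1)))%C).
    { rewrite <- Cpowz_succ by auto. f_equal. lia. }
    rewrite E1, E2, Ep. f_equal; field; auto.
  - destruct Ppsi as [P1 P2]. apply vanish_comb.
    + apply vanish_ext_p with (fun n => Cpowz z (- n) * (fst (psi n) - 0 * Cpowz z (- n)))%C. intros; simpl; ring.
      apply vanish_mul_p; auto. intros; apply Cpowz_mod; auto.
    + apply vanish_ext_p with (fun n => Cpowz z (- n) * (snd (psi n) - 1 * Cpowz z n))%C.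
      intros n. simpl. pose proof (Cpowz_opp_mul z n Hz0). 
      replace (Cpowz z (- n) * (snd (psi n) - 1 * Cpowz z n))%C with (Cpowz z (- n) * snd (psi n) - Cpowz z (- n) * Cpowz z n)%C by ring.
      rewrite H. reflexivity.
      apply vanish_mul_p; auto. intros; apply Cpowz_mod; auto.
  - destruct Mpsi as [M1 M2].
    pose proof (vanish_mul_m _ (fun n => Cpowz z (- n)) (fun n => Cpowz_mod z (- n) Hz) M2) as H.
    intros e He. destruct (H e He) as [N HN]. exists N. intros n Hn. specialize (HN n Hn). simpl in HN |- *.
    pose proof (Cpowz_opp_mul z n Hz0).
    replace (Cpowz z (- n) * snd (psi n) - / Tl)%C with (Cpowz z (- n) * (snd (psi n) - / Tl * Cpowz z n))%C.
    auto. replace (Cpowz z (- n) * (snd (psi n) - / Tl * Cpowz z n))%C with (Cpowz z (- n) * snd (psi n) - / Tl * (Cpowz z (- n) * Cpowz z n))%C by ring.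
    rewrite H0. ring.
Qed.

Lemma ident2 y Tl L Tr R Tbl Lb Tbr Rb : on_circle y -> scattering_coeffs q r (/ y)%C Tl L Tr R Tbl Lb Tbr Rb ->
  (forall Cst, 0 <= Cst -> (forall n, eps s2a1 r q z0 s2b1 z0 s2b3 z0 n <= Gf Cst n) -> Acl2 y = (/ Tbl)%C).
Proof.
  intros Hy (HTl & HTr & HTbl & HTbr & psi & phi & psib & phib & Spsi & Sphi & Spsib & Sphib &
     Ppsi & Mphi & Ppsib & Mphib & Mpsi & Pphi & Mpsib & Pphib) Cst HC HE.
  set (z := (/ y)%C) in *.
  assert (Hz : Cmod z = 1) by (apply inv_circle; auto).
  unfold on_circle in Hy. assert (Hy0 : y <> RtoC 0) by (apply (nz_of_mod y (1/2)); lra).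
  assert (Hz0 : z <> RtoC 0) by (apply (nz_of_mod z (1/2)); lra).
  assert (Hyz : y = (/ z)%C) by (unfold z; field; auto).
  set (x := fun n => (Cpowz z n * snd (psib n), Cpowz z n * fst (psib n))%C).
  apply (Acl_jost _ _ _ _ _ _ _ _ Cst HC HE y x). lra.
  - intros n. unfold x, Lfun, z0, s2a1, s2b1, s2b3; simpl. destruct (Spsib n) as [E1 E2].
    rewrite (Cpowz_succ z n Hz0). rewrite E1, E2, Hyz. f_equal; field; auto.
  - destruct Ppsib as [P1 P2]. apply vanish_comb.
    + apply vanish_ext_p with (fun n => Cpowz z n * (snd (psib n) - 0 * Cpowz z n))%C. intros; simpl; ring.
      apply vanish_mul_p; auto. intros; apply Cpowz_mod; auto.
    + apply vanish_ext_p with (fun n => Cpowz z n * (fst (psib n) - 1 * Cpowz z (- n)))%C.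
      intros n. simpl. pose proof (Cpowz_opp_mul z n Hz0). 
      replace (Cpowz z n * (fst (psib n) - 1 * Cpowz z (- n)))%C with (Cpowz z n * fst (psib n) - Cpowz z (- n) * Cpowz z n)%C by ring.
      rewrite H. reflexivity.
      apply vanish_mul_p; auto. intros; apply Cpowz_mod; auto.
  - destruct Mpsib as [M1 M2].
    pose proof (vanish_mul_m _ (fun n => Cpowz z n) (fun n => Cpowz_mod z n Hz) M1) as H.
    intros e He. destruct (H e He) as [N HN]. exists N. intros n Hn. specialize (HN n Hn). simpl in HN |- *.
    pose proof (Cpowz_opp_mul z n Hz0).
    replace (Cpowz z n * fst (psib n) - / Tbl)%C with (Cpowz z n * (fst (psib n) - / Tbl * Cpowz z (- n)))%C.
    auto. replace (Cpowz z n * (fst (psib n) - / Tbl * Cpowz z (- n)))%C with (Cpowz z n * fst (psib n) - / Tbl * (Cpowz z (- n) * Cpowz z n))%C by ring.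
    rewrite H0. ring.
Qed.
End Ident.

Lemma Cinv_nz (a : C) : a <> RtoC 0 -> (/ a)%C <> RtoC 0.
Proof.
  intros H E. apply Cmod_gt_0 in H. assert (Cmod (/ a) = 0) by (rewrite E; apply Cmod_0).
  rewrite Cmod_inv in H0. pose proof (Rinv_0_lt_compat _ H). lra. intro H1. rewrite H1, Cmod_0 in H. lra.
Qed.

Theorem theorem2p6
  (q r : Z -> C)
  (hq : rapid_decay q) (hr : rapid_decay r)
  (h1 : forall n : Z, (1 - q n * r n)%C <> RtoC 0)
  (h2 : forall n : Z, (1 + q n * r (n + 1)%Z)%C <> RtoC 0)
  (Tl L Tr R Tbl Lb Tbr Rb : C -> C)
  (hscat : forall z : C, on_circle z ->
     scattering_coeffs q r z (Tl z) (L z) (Tr z) (R z)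
                             (Tbl z) (Lb z) (Tbr z) (Rb z)) :
  ((forall z : C, on_circle z -> Tl z = Tr z /\ Tbl z = Tbr z) /\
   meromorphic_extension (fun z => Cmod z < 1) Tl /\
   meromorphic_extension (fun z => 1 < Cmod z) Tbl) /\
  (forall z : C, on_circle z ->
     (L z / Tl z = - (Rb z / Tbl z))%C /\
     (Lb z / Tbl z = - (R z / Tl z))%C /\
     (Tl z * Tbl z = 1 - L z * Lb z)%C /\
     (Tl z * Tbl z = 1 - R z * Rb z)%C).
Proof.
  assert (HTl : forall z, on_circle z -> Tl z <> RtoC 0) by (intros z Hz; destruct (hscat z Hz); tauto).
  assert (HTbl : forall z, on_circle z -> Tbl z <> RtoC 0) by (intros z Hz; destruct (hscat z Hz) as (_ & _ & H & _); auto).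
  destruct (decay_bound q hq) as [Cq [HCq Hq]]. destruct (decay_bound r hr) as [Cr [HCr Hr]].
  set (Cst := 2 * Cq + Cr + 2 * Cq * Cr).
  assert (HC : 0 <= Cst) by (unfold Cst; nra).
  pose proof (eps_gen q r Cq Cr Hq Hr) as HG.
  assert (E1 : forall n, eps z0 (s1a2 q) z0 (s1a4 q r) z0 q r (s1b4 q r) n <= Gf Cst n).
  { intros n. unfold eps, z0, s1a2, s1a4, s1b4. rewrite !Cmod_opp, !Cmod_mult, !Cmod_0.
    pose proof (HG n). fold Cst in H. lra. }
  assert (E2 : forall n, eps (s2a1 q r) r q z0 (s2b1 q r) z0 (s2b3 q) z0 n <= Gf Cst n).
  { intros n. unfold eps, z0, s2a1, s2b1, s2b3. rewrite !Cmod_opp, !Cmod_mult, !Cmod_0.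
    pose proof (HG n). fold Cst in H. lra. }
  split; [split; [|split]|].
  - intros z Hz. exact (proj1 (partb q r z _ _ _ _ _ _ _ _ Hz (hscat z Hz))).
  - apply mero_ext with (fun y => / (/ Tl y))%C.
    + apply (sys_mero _ _ _ _ _ _ _ _ Cst HC E1 (fun y => / Tl y)%C).
      * intros y Hy. apply (ident1 q r y _ _ _ _ _ _ _ _ Hy (hscat y Hy) ltac:(lra) Cst HC E1).
      * intros y Hy. apply Cinv_nz. apply HTl; auto.
    + intros z Hz. field. apply HTl; auto.
  - apply mero_ext with (fun z => / (/ Tbl (/ / z)))%C.
    + apply (mero_invert (fun y => / (/ Tbl (/ y)))%C).
      apply (sys_mero _ _ _ _ _ _ _ _ Cst HC E2 (fun y => / Tbl (/ y))%C).
      * intros y Hy. apply (ident2 q r y _ _ _ _ _ _ _ _ Hy (hscat (/ y)%C (inv_circle y Hy)) Cst HC E2).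
      * intros y Hy. apply Cinv_nz. apply HTbl. apply inv_circle; auto.
    + intros z Hz. assert (Hz0 : z <> RtoC 0) by (unfold on_circle in Hz; apply (nz_of_mod z (1/2)); lra).
      replace (/ / z)%C with z by (field; auto). field. apply HTbl; auto.
  - intros z Hz. exact (proj2 (partb q r z _ _ _ _ _ _ _ _ Hz (hscat z Hz))).
Qed.
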